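(* Let $A=\mathrm{Circ}(a_0,\dots,a_{n-1})\neq 0$, and let $p_1>p_2>\dots>p_s$ be all the indices in $\{1,\dots,n-1\}$ with $a_{p_1}=\dots=a_{p_s}=\lambda(A)$ (possibly $s=0$). Then: (i) the critical digraph $\mathcal{C}(A)$ consists of $m=\gcd(n,p_1,\dots,p_s)$ isomorphic strongly connected components, and for $i\in\{1,\dots,m\}$ the node set of the $i$-th component is $\{i,i+m,\dots,i+(n/m-1)m\}$; (ii) $\mathrm{per}(A)$, which equals the cyclicity of each of these components, is $1$ if $a_0=\lambda(A)$, and if $a_0\neq\lambda(A)$ then $$\mathrm{per}(A)=\gcd\Big(\tfrac{n}{\gcd(n,p_1)},\tfrac{p_1-p_2}{\gcd(p_1,p_2)},\tfrac{p_1-p_3}{\gcd(p_1,p_3)},\dots,\tfrac{p_1-p_s}{\gcd(p_1,p_s)}\Big)$$ $$=\gcd\Big(\tfrac{n}{\gcd(n,p_1)},\tfrac{p_1-p_2}{\gcd(p_1,p_2)},\tfrac{p_2-p_3}{\gcd(p_2,p_3)},\dots,\tfrac{p_{s-1}-p_s}{\gcd(p_{s-1},p_s)}\Big)$$ $$=\gcd\Big(\tfrac{n}{\gcd(n,p_1)},\tfrac{p_1-p_2}{\gcd(n,p_1,p_2)},\tfrac{p_1-p_3}{\gcd(n,p_1,p_2,p_3)},\dots,\tfrac{p_1-p_s}{\gcd(n,p_1,\dots,p_s)}\Big).$$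
   Context: Max algebra on $\mathbb{R}_+$ with $a\oplus b=\max(a,b)$ and ordinary product; $A^t$ is the max-algebraic power. $A=\mathrm{Circ}(a_0,\dots,a_{n-1})$ means $A_{i,j}=a_t$ with $t\in\{0,\dots,n-1\}$, $t\equiv j-i\pmod n$. The digraph $\mathcal{G}(A)$ has nodes $\{1,\dots,n\}$ and edges $(i,j)$ with $A_{i,j}\neq0$, weight $A_{i,j}$; a cycle's mean is the geometric mean of its edge weights; $\lambda(A)$ is the maximum cycle geometric mean (= largest max-algebraic eigenvalue). The critical digraph $\mathcal{C}(A)$ consists of all nodes and edges of the cycles of $\mathcal{G}(A)$ attaining mean $\lambda(A)$. The cyclicity of a strongly connected digraph is the gcd of its cycle lengths; of a digraph that is a disjoint union of strongly connected components with no walks between components, it is the lcm of the components' cyclicities. For $\lambda(A)\ne0$, $\mathrm{per}(A)$ is the ultimate period of the sequence $\{(A/\lambda(A))^t\}_{t\ge1}$, i.e. the least $\sigma$ such that $(A/\lambda(A))^{t+\sigma}=(A/\lambda(A))^t$ for all sufficiently large $t$. *)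

(* Defs.v *)
From Stdlib Require Import Reals Lra Lia Arith List Sorting.Sorted Relations.
Import ListNotations.
Open Scope R_scope.

(* Nodes of G(A) are 0,...,n-1 (paper's node i is our node i-1).
   An n x n matrix is a function nat -> nat -> R, only entries i,j < n matter. *)
Definition mat := nat -> nat -> R.

Definition circ (n : nat) (a : nat -> R) : mat :=
  fun i j => a ((j + n - i) mod n)%nat.

Definition mmul (n : nat) (A B : mat) : mat :=
  fun i j => fold_right Rmax 0 (map (fun k => A i k * B k j) (seq 0 n)).
Definition mid : mat := fun i j => if Nat.eqb i j then 1 else 0.
Fixpoint mpow (n : nat) (A : mat) (t : nat) : mat :=
  match t with
  | O => mid
  | S t' => mmul n A (mpow n A t')
  end.
Definition mscale (A : mat) (c : R) : mat := fun i j => A i j / c.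

Definition ult_periodic (n : nat) (f : nat -> mat) (sigma : nat) : Prop :=
  exists T : nat, forall t : nat, (T <= t)%nat ->
    forall i j, (i < n)%nat -> (j < n)%nat -> f (t + sigma)%nat i j = f t i j.
Definition is_ult_period (n : nat) (f : nat -> mat) (sigma : nat) : Prop :=
  (0 < sigma)%nat /\ ult_periodic n f sigma /\
  forall sigma', (0 < sigma')%nat -> ult_periodic n f sigma' -> (sigma <= sigma')%nat.

(* A cycle (closed walk) is a nonempty node list [v0; ...; v_{k-1}];
   its edges are (v0,v1),...,(v_{k-2},v_{k-1}),(v_{k-1},v0). *)
Definition cycle_edges (c : list nat) : list (nat * nat) :=
  combine c (tl c ++ firstn 1 c).
Definition is_cycle (n : nat) (A : mat) (c : list nat) : Prop :=
  c <> [] /\ Forall (fun v => (v < n)%nat) c /\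
  Forall (fun e => A (fst e) (snd e) <> 0) (cycle_edges c).
Definition cycle_weight (A : mat) (c : list nat) : R :=
  fold_right Rmult 1 (map (fun e => A (fst e) (snd e)) (cycle_edges c)).
Definition cycle_mean (A : mat) (c : list nat) : R :=
  Rpower (cycle_weight A c) (/ INR (length c)).

Definition is_lambda (n : nat) (A : mat) (lam : R) : Prop :=
  (exists c, is_cycle n A c /\ cycle_mean A c = lam) /\
  (forall c, is_cycle n A c -> cycle_mean A c <= lam).

Definition crit_cycle (n : nat) (A : mat) (lam : R) (c : list nat) : Prop :=
  is_cycle n A c /\ cycle_mean A c = lam.
Definition crit_node (n : nat) (A : mat) (lam : R) (v : nat) : Prop :=
  exists c, crit_cycle n A lam c /\ In v c.
Definition crit_edge (n : nat) (A : mat) (lam : R) (u v : nat) : Prop :=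
  exists c, crit_cycle n A lam c /\ In (u, v) (cycle_edges c).
Definition crit_scc (n : nat) (A : mat) (lam : R) (u v : nat) : Prop :=
  crit_node n A lam u /\ crit_node n A lam v /\
  clos_refl_trans nat (crit_edge n A lam) u v /\
  clos_refl_trans nat (crit_edge n A lam) v u.

(* node set {j < n | j mod m = r} (paper: {r+1, r+1+m, ..., r+1+(n/m-1)m}) *)
Definition comp_nodes (n m r : nat) (v : nat) : Prop :=
  (v < n)%nat /\ (v mod m = r)%nat.

Definition comp_cycle_length (n : nat) (A : mat) (lam : R) (m r : nat) (k : nat) : Prop :=
  exists c, c <> [] /\ Forall (comp_nodes n m r) c /\
    Forall (fun e => crit_edge n A lam (fst e) (snd e)) (cycle_edges c) /\
    length c = k.

Definition is_gcd_of (P : nat -> Prop) (g : nat) : Prop :=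
  (forall k, P k -> Nat.divide g k) /\
  (forall d, (forall k, P k -> Nat.divide d k) -> Nat.divide d g).

Definition gcd_list (n : nat) (ps : list nat) : nat := fold_right Nat.gcd n ps.

Definition per_formula1 (n : nat) (ps : list nat) : nat :=
  let p1 := hd 0%nat ps in
  fold_right Nat.gcd (n / Nat.gcd n p1)%nat
    (map (fun q => ((p1 - q) / Nat.gcd p1 q)%nat) (tl ps)).
Definition per_formula2 (n : nat) (ps : list nat) : nat :=
  let p1 := hd 0%nat ps in
  fold_right Nat.gcd (n / Nat.gcd n p1)%nat
    (map (fun pq => ((fst pq - snd pq) / Nat.gcd (fst pq) (snd pq))%nat)
         (combine ps (tl ps))).
Definition per_formula3 (n : nat) (ps : list nat) : nat :=
  let p1 := hd 0%nat ps in
  fold_right Nat.gcd (n / Nat.gcd n p1)%nat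
    (map (fun j => ((p1 - nth (j - 1) ps 0) / gcd_list n (firstn j ps))%nat)
         (seq 2 (length ps - 1))).

(* Main.v *)
Require Import Defs.
From Stdlib Require Import Reals Arith Lia Lra List Sorting.Sorted Relations ListDec Classical.
Import ListNotations.
Open Scope R_scope.

Open Scope R_scope.

Lemma cong_mod n a b k1 k2 : (a + k1 * n = b + k2 * n)%nat -> a mod n = b mod n.
Proof.
  intro H. rewrite <- (Nat.Div0.mod_add a k1 n), <- (Nat.Div0.mod_add b k2 n), H. reflexivity.
Qed.

Ltac dm x n := pose proof (Nat.div_mod_eq x n); assert ((x) mod n < n)%nat by (apply Nat.mod_upper_bound; lia).
Ltac gen_divmod := repeat match goal with
  | |- context [?x / ?n] => generalize dependent (x / n); intros
  | H : context [?x / ?n] |- _ => generalize dependent (x / n); intros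
  | |- context [?x mod ?n] => generalize dependent (x mod n); intros
  | H : context [?x mod ?n] |- _ => generalize dependent (x mod n); intros
  end.

Definition off (n u v : nat) : nat := ((v + n - u) mod n)%nat.

Lemma off_lt n u v : (0 < n)%nat -> (off n u v < n)%nat.
Proof. intro. unfold off. apply Nat.mod_upper_bound. lia. Qed.

Lemma off_step n u d : (0 < n)%nat -> (u < n)%nat -> (d < n)%nat -> off n u ((u + d) mod n) = d.
Proof. intros. unfold off. rewrite <- (Nat.mod_small d n) at 2 by lia.
  dm (u+d)%nat n. apply (cong_mod _ _ _ ((u+d)/n) 1). nia. Qed.

Lemma step_off n u v : (0 < n)%nat -> (u < n)%nat -> (v < n)%nat -> ((u + off n u v) mod n = v)%nat.
Proof. intros. unfold off. rewrite <- (Nat.mod_small v n) at 2 by lia.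
  dm (v + n - u)%nat n. apply (cong_mod _ _ _ ((v+n-u)/n) 1). gen_divmod. nia. Qed.

Lemma off_shift n u v c : (0 < n)%nat -> (u < n)%nat -> (v < n)%nat ->
  off n ((u + c) mod n) ((v + c) mod n) = off n u v.
Proof. intros. unfold off. dm (u+c)%nat n. dm (v+c)%nat n.
  apply (cong_mod _ _ _ ((v+c)/n) ((u+c)/n)). gen_divmod. nia. Qed.

Lemma add_mod_cancel n x y z : (0 < n)%nat -> ((x + y) mod n = (z + y) mod n)%nat -> (x mod n = z mod n)%nat.
Proof. intros Hn H. dm (x+y)%nat n. dm (z+y)%nat n.
  apply (cong_mod _ _ _ ((z+y)/n) ((x+y)/n)). rewrite H in *. gen_divmod. nia. Qed.

Lemma mod_mod_div n m x : (0 < m)%nat -> Nat.divide m n -> ((x mod n) mod m = x mod m)%nat.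
Proof. intros Hm [k ->]. destruct k. reflexivity.
  dm x (S k * m)%nat. apply (cong_mod _ _ _ (S k * (x / (S k * m))) 0). gen_divmod. nia. Qed.

Lemma mod_div_iff n g x : (0 < n)%nat -> Nat.divide g n -> (Nat.divide g (x mod n) <-> Nat.divide g x).
Proof. intros Hn Hg. pose proof (Nat.div_mod_eq x n) as H0. split; intro H1.
  - rewrite H0. apply Nat.divide_add_r; auto. apply Nat.divide_mul_l; auto.
  - apply (Nat.divide_add_cancel_r _ (n * (x/n))). apply Nat.divide_mul_l; auto. rewrite <- H0; auto.
Qed.

Fixpoint wnodes (n v : nat) (ds : list nat) : list nat :=
  match ds with [] => [] | d :: ds' => v :: wnodes n ((v + d) mod n) ds' end.
Fixpoint wend (n v : nat) (ds : list nat) : nat :=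
  match ds with [] => v | d :: ds' => wend n ((v + d) mod n) ds' end.
Fixpoint pedges (n v : nat) (ds : list nat) : list (nat * nat) :=
  match ds with [] => [] | d :: ds' => (v, (v + d) mod n) :: pedges n ((v + d) mod n) ds' end.

Lemma wnodes_length n v ds : length (wnodes n v ds) = length ds.
Proof. revert v; induction ds; simpl; auto. Qed.

Lemma wend_sum n v ds : (0 < n)%nat -> (v < n)%nat -> wend n v ds = ((v + list_sum ds) mod n)%nat.
Proof. revert v; induction ds as [|d ds IH]; intros v Hn Hv; simpl.
  - rewrite Nat.add_0_r, Nat.mod_small; auto.
  - rewrite IH; auto. 2: apply Nat.mod_upper_bound; lia.
    rewrite Nat.Div0.add_mod_idemp_l. f_equal. lia. Qed.

Lemma cycle_edges_cons v rest : cycle_edges (v :: rest) = combine (v :: rest) (rest ++ [v]).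
Proof. reflexivity. Qed.

Lemma wnodes_combine n v ds : ds <> [] ->
  combine (wnodes n v ds) (tl (wnodes n v ds) ++ [wend n v ds]) = pedges n v ds.
Proof. revert v; induction ds as [|d ds IH]; intros v Hne; [congruence|].
  destruct ds as [|d' ds'].
  - reflexivity.
  - simpl wnodes. simpl tl. simpl wend.
    specialize (IH ((v + d) mod n)%nat ltac:(discriminate)). simpl in IH.
    simpl. f_equal. exact IH. Qed.

Lemma wnodes_cycle_edges n v ds : ds <> [] -> wend n v ds = v ->
  cycle_edges (wnodes n v ds) = pedges n v ds.
Proof. intros Hne He. pose proof (wnodes_combine n v ds Hne) as H. rewrite He in H.
  destruct ds; [congruence|]. simpl in *. exact H. Qed.

Lemma wnodes_lt n v ds : (0 < n)%nat -> (v < n)%nat -> Forall (fun x => x < n)%nat (wnodes n v ds).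
Proof. revert v; induction ds; intros; simpl; constructor; auto. apply IHds; auto. apply Nat.mod_upper_bound; lia. Qed.

Lemma pedges_off n v ds : (0 < n)%nat -> (v < n)%nat -> Forall (fun x => x < n)%nat ds ->
  map (fun e => off n (fst e) (snd e)) (pedges n v ds) = ds.
Proof. revert v; induction ds; intros v Hn Hv Hds; simpl; auto. inversion Hds; subst.
  f_equal. apply off_step; auto. apply IHds; auto. apply Nat.mod_upper_bound; lia. Qed.

Lemma pedges_lt n v ds : (0 < n)%nat -> (v < n)%nat ->
  Forall (fun e => fst e < n /\ snd e < n)%nat (pedges n v ds).
Proof. revert v; induction ds; intros v Hn Hv; simpl; constructor; simpl.
  split; auto. apply Nat.mod_upper_bound; lia. apply IHds; auto. apply Nat.mod_upper_bound; lia. Qed.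

Lemma cycle_edges_length (c : list nat) : c <> [] -> length (cycle_edges c) = length c.
Proof. intro. destruct c; [congruence|]. rewrite cycle_edges_cons, length_combine, length_app. simpl length. rewrite Nat.add_1_r, Nat.min_id. reflexivity. Qed.

Lemma path_sum n v rest w : (0 < n)%nat -> Forall (fun x => x < n)%nat (v :: rest) -> (w < n)%nat ->
  ((v + list_sum (map (fun e => off n (fst e) (snd e)) (combine (v :: rest) (rest ++ [w])))) mod n = w)%nat.
Proof. revert v; induction rest as [|x rest IH]; intros v Hn Hf Hw; inversion Hf; subst.
  - simpl. rewrite Nat.add_0_r. apply step_off; auto.
  - simpl combine. simpl map. simpl list_sum.
    specialize (IH x Hn H2 Hw). simpl in IH.
    rewrite Nat.add_assoc, <- Nat.Div0.add_mod_idemp_l, step_off; auto. inversion H2; auto.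
Qed.

Lemma cycle_sum n c : (0 < n)%nat -> c <> [] -> Forall (fun x => x < n)%nat c ->
  (list_sum (map (fun e => off n (fst e) (snd e)) (cycle_edges c)) mod n = 0)%nat.
Proof. intros Hn Hc Hf. destruct c as [|v rest]; [congruence|]. rewrite cycle_edges_cons.
  pose proof (path_sum n v rest v Hn Hf ltac:(inversion Hf; auto)) as H.
  match goal with |- (?X mod n = 0)%nat => enough (G : (X mod n = 0 mod n)%nat) by (rewrite G; apply Nat.Div0.mod_0_l) end.
  apply (add_mod_cancel n _ v 0 Hn). rewrite Nat.add_comm. rewrite H. simpl.
  rewrite Nat.mod_small; auto. inversion Hf; auto. Qed.

Open Scope R_scope.

Lemma list_sum_repeat x k : list_sum (repeat x k) = (k * x)%nat.
Proof. induction k; simpl; try rewrite IHk; lia. Qed.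

Lemma prod_repeat x k : fold_right Rmult 1 (repeat x k) = x ^ k.
Proof. induction k; simpl; try rewrite IHk; ring. Qed.

Lemma prod_const (l : list R) x : Forall (fun w => w = x) l -> fold_right Rmult 1 l = x ^ length l.
Proof. induction 1; simpl; auto. rewrite IHForall, H. ring. Qed.

Lemma circ_off n a u v : circ n a u v = a (off n u v).
Proof. reflexivity. Qed.

Lemma rp_pow_inv x k : 0 < x -> (0 < k)%nat -> Rpower (x ^ k) (/ INR k) = x.
Proof. intros Hx Hk. rewrite <- Rpower_pow by auto. rewrite Rpower_mult, Rinv_r, Rpower_1; auto.
  apply not_0_INR. lia. Qed.

Lemma rp_pos x y : 0 < Rpower x y.
Proof. unfold Rpower. apply exp_pos. Qed.

Lemma prod_pos (ws : list R) L : Forall (fun w => 0 < w <= L) ws -> 0 < fold_right Rmult 1 ws.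
Proof. induction 1; simpl. lra. destruct H. apply Rmult_lt_0_compat; auto. Qed.

Lemma prod_le (ws : list R) L : Forall (fun w => 0 < w <= L) ws -> fold_right Rmult 1 ws <= L ^ length ws.
Proof. intro H. induction H; simpl. lra. destruct H.
  apply Rmult_le_compat; try lra. apply Rlt_le, prod_pos with L; auto. Qed.

Lemma prod_lt (ws : list R) L : Forall (fun w => 0 < w <= L) ws -> Exists (fun w => w < L) ws ->
  fold_right Rmult 1 ws < L ^ length ws.
Proof. intros H HE. induction H as [|x l Hx H IH]. inversion HE. simpl. destruct Hx as [Hx1 Hx2].
  pose proof (prod_le _ _ H). pose proof (prod_pos _ _ H).
  inversion HE as [? ? Hlt|? ? HE']; subst.
  - apply Rle_lt_trans with (x * L ^ length l). apply Rmult_le_compat_l; lra.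
    apply Rmult_lt_compat_r; auto. apply pow_lt; lra.
  - pose proof (IH HE').
    apply Rle_lt_trans with (L * fold_right Rmult 1 l). apply Rmult_le_compat_r; lra.
    apply Rmult_lt_compat_l; lra. Qed.

Lemma cycle_weight_walk n a v ds : (0 < n)%nat -> (v < n)%nat -> Forall (fun x => x < n)%nat ds ->
  ds <> [] -> wend n v ds = v -> cycle_weight (circ n a) (wnodes n v ds) = fold_right Rmult 1 (map a ds).
Proof. intros. unfold cycle_weight. rewrite wnodes_cycle_edges by auto.
  rewrite <- (pedges_off n v ds) at 2 by auto. rewrite map_map. reflexivity. Qed.

Lemma walk_is_cycle n a v ds : (0 < n)%nat -> (v < n)%nat -> Forall (fun x => x < n)%nat ds ->
  ds <> [] -> wend n v ds = v -> Forall (fun d => a d <> 0) ds -> is_cycle n (circ n a) (wnodes n v ds).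
Proof. intros Hn Hv Hds Hne He Ha. split; [|split].
  - destruct ds; simpl; congruence.
  - apply wnodes_lt; auto.
  - rewrite wnodes_cycle_edges by auto. rewrite <- (pedges_off n v ds) in Ha by auto.
    rewrite Forall_map in Ha. exact Ha. Qed.

Record Hyp (n : nat) (a : nat -> R) (lam : R) : Prop := mkHyp {
  H_n : (0 < n)%nat; H_a : forall t, (t < n)%nat -> 0 <= a t; H_l : is_lambda n (circ n a) lam }.

Lemma lam_pos n a lam : Hyp n a lam -> 0 < lam.
Proof. intros [_ _ [[c [_ Hc]] _]]. rewrite <- Hc. apply rp_pos. Qed.

Lemma repeat_ne {A} (x : A) k : (0 < k)%nat -> repeat x k <> [].
Proof. destruct k; simpl; [lia | discriminate]. Qed.

Lemma wend_repeat n v t : (0 < n)%nat -> (v < n)%nat -> wend n v (repeat t n) = v.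
Proof. intros. rewrite wend_sum, list_sum_repeat by auto.
  rewrite <- (Nat.mod_small v n) at 2 by auto. apply (cong_mod _ _ _ 0 t). lia. Qed.

Lemma a_le_lam n a lam : Hyp n a lam -> forall t, (t < n)%nat -> a t <= lam.
Proof. intros H t Ht. pose proof (lam_pos _ _ _ H) as Hlp. destruct H as [Hn Ha [_ Hl]].
  destruct (Req_dec (a t) 0) as [H0|H0]. lra.
  assert (Hat : 0 < a t) by (pose proof (Ha t Ht); lra).
  assert (Hf : Forall (fun x => x < n)%nat (repeat t n)) by (apply Forall_forall; intros x Hx; apply repeat_spec in Hx; lia).
  pose proof (Hl (wnodes n 0 (repeat t n))) as Hc.
  unfold cycle_mean in Hc. rewrite cycle_weight_walk, wnodes_length, map_repeat, prod_repeat, repeat_length, rp_pow_inv in Hc; auto.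
  apply Hc. apply walk_is_cycle; auto. apply repeat_ne; auto. apply wend_repeat; auto.
  apply Forall_forall; intros x Hx; apply repeat_spec in Hx; subst; auto.
  apply repeat_ne; auto. apply wend_repeat; auto. Qed.

Lemma edge_in_cycle (c : list nat) u v : In (u, v) (cycle_edges c) -> In u c /\ In v c.
Proof. destruct c as [|x c']. simpl; tauto. rewrite cycle_edges_cons. intro H. split.
  eapply in_combine_l; eauto. apply in_combine_r in H. apply in_app_or in H.
  destruct H as [H|[H|[]]]; [right; auto | left; auto]. Qed.

Lemma cycle_edge_props n a lam c : Hyp n a lam -> is_cycle n (circ n a) c ->
  Forall (fun e => 0 < circ n a (fst e) (snd e) <= lam) (cycle_edges c).
Proof. intros H [Hc [Hl He]]. apply Forall_forall. intros [u v] Hin.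
  destruct (edge_in_cycle _ _ _ Hin) as [Hu Hv].
  rewrite Forall_forall in Hl, He. specialize (Hl u Hu). specialize (He _ Hin). simpl in *.
  rewrite circ_off in *. pose proof (off_lt n u v (H_n _ _ _ H)).
  pose proof (H_a _ _ _ H _ H0). pose proof (a_le_lam _ _ _ H _ H0). lra. Qed.

Lemma cycle_mean_lt n a lam c : Hyp n a lam -> is_cycle n (circ n a) c ->
  Exists (fun e => circ n a (fst e) (snd e) < lam) (cycle_edges c) -> cycle_mean (circ n a) c < lam.
Proof. intros H Hc HE. pose proof (lam_pos _ _ _ H). pose proof (cycle_edge_props _ _ _ _ H Hc) as Hp.
  assert (Hne : c <> []) by apply Hc.
  unfold cycle_mean, cycle_weight.
  set (ws := map (fun e => circ n a (fst e) (snd e)) (cycle_edges c)).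
  assert (Hw : Forall (fun w => 0 < w <= lam) ws) by (unfold ws; apply Forall_map; auto).
  assert (HwE : Exists (fun w => w < lam) ws) by (unfold ws; apply Exists_map; auto).
  assert (Hlen : length ws = length c) by (unfold ws; rewrite length_map; apply cycle_edges_length; auto).
  pose proof (prod_lt _ _ Hw HwE). pose proof (prod_pos _ _ Hw).
  assert (Hk : (0 < length c)%nat) by (destruct c; simpl; [congruence|lia]).
  rewrite <- (rp_pow_inv lam (length c)) by auto.
  apply Rlt_Rpower_l. apply Rinv_0_lt_compat, lt_0_INR; auto.
  rewrite <- Hlen. split; auto. Qed.

Lemma crit_cycle_edges n a lam c : Hyp n a lam -> crit_cycle n (circ n a) lam c ->
  Forall (fun e => circ n a (fst e) (snd e) = lam) (cycle_edges c).
Proof. intros H [Hc Hm]. apply NNPP. intro HF.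
  apply neg_Forall_Exists_neg in HF. 2: intro x; apply Req_EM_T.
  assert (Exists (fun e => circ n a (fst e) (snd e) < lam) (cycle_edges c)).
  { pose proof (cycle_edge_props _ _ _ _ H Hc) as Hp. rewrite Forall_forall in Hp.
    rewrite Exists_exists in *. destruct HF as [e [He1 He2]]. exists e. split; auto.
    specialize (Hp e He1). lra. }
  pose proof (cycle_mean_lt _ _ _ _ H Hc H0). lra. Qed.

Lemma prod_map_const (a : nat -> R) lam ds : Forall (fun d => a d = lam) ds ->
  fold_right Rmult 1 (map a ds) = lam ^ length ds.
Proof. intro. rewrite <- (length_map a). apply prod_const. apply Forall_map; auto. Qed.

Definition critd (n : nat) (a : nat -> R) (lam : R) (d : nat) : Prop := (d < n)%nat /\ a d = lam.

Lemma crit_walk n a lam v ds : Hyp n a lam -> (v < n)%nat -> Forall (critd n a lam) ds ->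
  ds <> [] -> wend n v ds = v -> crit_cycle n (circ n a) lam (wnodes n v ds).
Proof. intros H Hv Hds Hne He. pose proof (lam_pos _ _ _ H). pose proof (H_n _ _ _ H).
  assert (Hlt : Forall (fun x => x < n)%nat ds) by (eapply Forall_impl; [|exact Hds]; intros x [? ?]; auto).
  assert (Hal : Forall (fun d => a d = lam) ds) by (eapply Forall_impl; [|exact Hds]; intros x [? ?]; auto).
  split.
  - apply walk_is_cycle; auto. eapply Forall_impl; [|exact Hal]. intros; lra.
  - assert (Hk : (0 < length ds)%nat) by (destruct ds; simpl; [congruence|lia]).
    unfold cycle_mean. rewrite cycle_weight_walk by auto. rewrite (prod_map_const a lam) by auto.
    rewrite wnodes_length, rp_pow_inv; auto. Qed.

Lemma crit_edge_iff n a lam u v : Hyp n a lam ->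
  (crit_edge n (circ n a) lam u v <-> (u < n)%nat /\ (v < n)%nat /\ a (off n u v) = lam).
Proof. intro H. pose proof (H_n _ _ _ H). split.
  - intros [c [Hc Hin]]. destruct (edge_in_cycle _ _ _ Hin) as [Hu Hv].
    pose proof (crit_cycle_edges _ _ _ _ H Hc) as He. rewrite Forall_forall in He.
    destruct Hc as [[_ [Hl _]] _]. rewrite Forall_forall in Hl.
    split; [auto|split; [auto|]]. apply (He _ Hin).
  - intros [Hu [Hv Ha]]. exists (wnodes n u (repeat (off n u v) n)). split.
    + apply crit_walk; auto. apply Forall_forall; intros x Hx; apply repeat_spec in Hx; subst.
      unfold critd; split; auto. apply off_lt; auto. apply repeat_ne; auto. apply wend_repeat; auto.
    + rewrite wnodes_cycle_edges. 2: apply repeat_ne; auto. 2: apply wend_repeat; auto.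
      destruct n as [|n']; [lia|]. cbn [repeat pedges]. left. f_equal. apply step_off; auto. Qed.

Lemma crit_exists n a lam : Hyp n a lam -> exists t, (t < n)%nat /\ a t = lam.
Proof. intro H. apply NNPP. intro Hno.
  destruct (H_l _ _ _ H) as [[c [Hc Hm]] _].
  assert (Hall : forall u w, (u < n)%nat -> circ n a u w < lam).
  { intros u w Hu. rewrite circ_off. assert (Ho : (off n u w < n)%nat) by (apply off_lt, (H_n _ _ _ H)).
    pose proof (a_le_lam _ _ _ H _ Ho). destruct (Req_dec (a (off n u w)) lam). exfalso; eauto. lra. }
  assert (Exists (fun e => circ n a (fst e) (snd e) < lam) (cycle_edges c)).
  { destruct Hc as [Hne [Hl Hw]]. destruct c as [|v rest]; [congruence|].
    rewrite cycle_edges_cons. inversion Hl as [|v0 l0 Hv Hrest].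
    destruct rest as [|x0 rest]; simpl; constructor; simpl; apply Hall; auto. }
  pose proof (cycle_mean_lt _ _ _ _ H Hc H0). lra. Qed.

Open Scope R_scope. Open Scope nat_scope.

Lemma bez_closure n (P : nat -> Prop) : (0 < n)%nat ->
  (forall x y, P x -> P y -> P (x + y)%nat) -> (forall x j, P (x + j * n)%nat -> P x) ->
  forall a b, (0 < a)%nat -> (forall k, P (k * a)%nat) -> (forall k, P (k * b)%nat) ->
  forall k, P (k * Nat.gcd a b)%nat.
Proof. intros Hn Hadd Hmod a b Ha Pa Pb k.
  destruct (Nat.gcd_bezout_pos a b Ha) as [u [v Huv]].
  apply (Hmod _ (k * v * b)).
  replace (k * Nat.gcd a b + k * v * b * n)%nat with ((k * u) * a + (k * v * (n - 1)) * b)%nat.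
  apply Hadd; auto.
  replace (k * u * a)%nat with (k * (u * a))%nat by ring. rewrite Huv.
  destruct n; [lia|]. replace (S n - 1)%nat with n by lia. ring. Qed.

Lemma gcd_list_divide_n n ps : Nat.divide (gcd_list n ps) n.
Proof. induction ps; simpl. apply Nat.divide_refl. eapply Nat.divide_trans; [apply Nat.gcd_divide_r|]; auto. Qed.

Lemma gcd_list_divide_in n ps p : In p ps -> Nat.divide (gcd_list n ps) p.
Proof. induction ps; simpl; [tauto|]. intros [H|H]. subst; apply Nat.gcd_divide_l.
  eapply Nat.divide_trans; [apply Nat.gcd_divide_r|]; auto. Qed.

Lemma gcd_list_pos n ps : (0 < n)%nat -> (0 < gcd_list n ps)%nat.
Proof. intros Hn. destruct (gcd_list n ps) eqn:E; [|lia].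
  pose proof (gcd_list_divide_n n ps) as [k Hk]. rewrite E in Hk. lia. Qed.

Lemma gcd_list_greatest n ps d : Nat.divide d n -> (forall p, In p ps -> Nat.divide d p) -> Nat.divide d (gcd_list n ps).
Proof. induction ps; simpl; intros; auto. apply Nat.gcd_greatest; auto. Qed.

Lemma bez_list n (P : nat -> Prop) ps : (0 < n)%nat ->
  (forall x y, P x -> P y -> P (x + y)%nat) -> (forall x j, P (x + j * n)%nat -> P x) ->
  (forall k, P (k * n)%nat) -> (forall p, In p ps -> forall k, P (k * p)%nat) ->
  forall k, P (k * gcd_list n ps)%nat.
Proof. intros Hn Hadd Hmod Pn. induction ps as [|p ps IH]; intros Hps; simpl; auto.
  rewrite Nat.gcd_comm. apply (bez_closure n); auto. apply gcd_list_pos; auto.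
  apply IH. intros; apply Hps; simpl; auto. apply Hps; simpl; auto. Qed.

Definition reach n a lam := clos_refl_trans nat (crit_edge n (circ n a) lam).

Lemma reach_mult n a lam p : Hyp n a lam -> (p < n)%nat -> a p = lam ->
  forall k u, (u < n)%nat -> reach n a lam u ((u + k * p) mod n).
Proof. intros H Hp Hap. pose proof (H_n _ _ _ H). induction k; intros u Hu.
  - simpl. rewrite Nat.add_0_r, Nat.mod_small by auto. apply rt_refl.
  - apply rt_trans with ((u + p) mod n)%nat.
    + apply rt_step. apply crit_edge_iff; auto. split; auto. split. apply Nat.mod_upper_bound; lia.
      rewrite off_step; auto.
    + replace ((u + S k * p) mod n)%nat with ((((u + p) mod n) + k * p) mod n)%nat.
      apply IHk. apply Nat.mod_upper_bound; lia.
      rewrite Nat.Div0.add_mod_idemp_l. f_equal. lia. Qed.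

Lemma reach_gcd n a lam ps : Hyp n a lam -> (forall p, In p ps -> (p < n)%nat /\ a p = lam) ->
  forall k u, (u < n)%nat -> reach n a lam u ((u + k * gcd_list n ps) mod n).
Proof. intros H Hps. pose proof (H_n _ _ _ H).
  set (Q := fun y => forall u, (u < n)%nat -> reach n a lam u ((u + y) mod n)).
  enough (forall k, Q (k * gcd_list n ps)%nat) by (intros; apply H1; auto).
  apply bez_list; auto; unfold Q.
  - intros x y Hx Hy u Hu. apply rt_trans with ((u + x) mod n)%nat. apply Hx; auto.
    replace ((u + (x + y)) mod n)%nat with ((((u + x) mod n) + y) mod n)%nat.
    apply Hy. apply Nat.mod_upper_bound; lia. rewrite Nat.Div0.add_mod_idemp_l. f_equal. lia.
  - intros x j Hx u Hu. specialize (Hx u Hu). rewrite Nat.add_assoc, Nat.Div0.mod_add in Hx. auto.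
  - intros k u Hu. rewrite Nat.Div0.mod_add, Nat.mod_small by auto. apply rt_refl.
  - intros p Hp k u Hu. destruct (Hps p Hp). apply reach_mult; auto. Qed.

Open Scope R_scope. Open Scope nat_scope.

Lemma php N (f : nat -> nat) : (forall i, i <= N -> f i < N) -> exists i j, i < j <= N /\ f i = f j.
Proof. intro Hf. set (l := map f (seq 0 (S N))).
  destruct (NoDup_dec Nat.eq_dec l) as [Hnd|Hnd].
  - exfalso. assert (incl l (seq 0 N)).
    { intros x Hx. unfold l in Hx. apply in_map_iff in Hx. destruct Hx as [i [<- Hi]].
      apply in_seq in Hi. apply in_seq. specialize (Hf i ltac:(lia)). lia. }
    pose proof (NoDup_incl_length Hnd H). unfold l in H0. rewrite length_map, !length_seq in H0. lia.
  - apply (not_NoDup dec_eq_nat) in Hnd. destruct Hnd as [x [l1 [l2 [l3 Hl]]]].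
    assert (Hlen : length l = S N) by (unfold l; rewrite length_map, length_seq; auto).
    exists (length l1), (length l1 + S (length l2)).
    assert (Hl' : length l = length l1 + S (length l2) + S (length l3)) by (rewrite Hl, !length_app; simpl; rewrite length_app; simpl; lia).
    split. lia.
    assert (E1 : nth (length l1) l 0 = x) by (rewrite Hl, app_nth2, Nat.sub_diag; auto).
    assert (E2 : nth (length l1 + S (length l2)) l 0 = x).
    { rewrite Hl, app_nth2 by lia. replace (length l1 + S (length l2) - length l1) with (S (length l2)) by lia.
      simpl. rewrite app_nth2, Nat.sub_diag; auto. }
    unfold l in E1, E2. rewrite (nth_indep _ _ (f 0)) in E1 by (rewrite length_map, length_seq; lia).
    rewrite (nth_indep _ _ (f 0)) in E2 by (rewrite length_map, length_seq; lia).
    rewrite map_nth, seq_nth in E1 by lia. rewrite map_nth, seq_nth in E2 by lia. simpl in E1, E2. congruence.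
Qed.

Lemma block (K : list nat -> nat) N l : N <= length l -> (forall i, i <= N -> K (firstn i l) < N) ->
  exists l1 R l2, l = l1 ++ R ++ l2 /\ R <> [] /\ length R <= N /\ K l1 = K (l1 ++ R).
Proof. intros HN HK. destruct (php N (fun i => K (firstn i l)) HK) as [i [j [Hij Hf]]].
  exists (firstn i l), (firstn (j - i) (skipn i l)), (skipn j l).
  assert (Ej : firstn j l = firstn i l ++ firstn (j - i) (skipn i l)).
  { rewrite <- (firstn_skipn i (firstn j l)). rewrite firstn_firstn, skipn_firstn_comm.
    f_equal. f_equal. lia. }
  assert (HR : length (firstn (j - i) (skipn i l)) = j - i) by (rewrite length_firstn, length_skipn; lia).
  split; [|split; [|split]].
  - rewrite app_assoc, <- Ej. symmetry. apply firstn_skipn.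
  - intro E. rewrite E in HR. simpl in HR. lia.
  - lia.
  - rewrite <- Ej. auto.
Qed.

Lemma mod0_add n x y : 0 < n -> x mod n = 0 -> (y + x) mod n = y mod n.
Proof. intros Hn H. rewrite Nat.Div0.add_mod, H, Nat.add_0_r, Nat.Div0.mod_mod. auto. Qed.

Definition Ec n a lam s0 c y := exists l, length l = c /\ Forall (critd n a lam) l /\
  (list_sum l + c * (n - s0)) mod n = y mod n.

Section dummy. End dummy.

Lemma Ec_succ n a lam s0 c y : 0 < n -> critd n a lam s0 -> Ec n a lam s0 c y -> Ec n a lam s0 (S c) y.
Proof. intros Hn Hs [l [Hl [Hc Hm]]]. exists (s0 :: l). split; [simpl; auto|split; [constructor; auto|]].
  rewrite <- Hm. destruct Hs as [Hs _]. simpl list_sum.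
  apply (cong_mod _ _ _ 0 1). remember (n - s0) as t. assert (n = s0 + t) by lia. subst n. nia. Qed.

Lemma Ec_up n a lam s0 c c' y : 0 < n -> critd n a lam s0 -> c <= c' -> Ec n a lam s0 c y -> Ec n a lam s0 c' y.
Proof. intros Hn Hs Hle. induction Hle; auto. intro; apply Ec_succ; auto. Qed.

Lemma Ec_add n a lam s0 c1 c2 y1 y2 : 0 < n -> Ec n a lam s0 c1 y1 -> Ec n a lam s0 c2 y2 ->
  Ec n a lam s0 (c1 + c2) (y1 + y2).
Proof. intros Hn [l1 [H1 [C1 M1]]] [l2 [H2 [C2 M2]]]. exists (l1 ++ l2).
  split; [rewrite length_app; lia|split; [apply Forall_app; auto|]].
  rewrite list_sum_app. rewrite (Nat.Div0.add_mod y1), <- M1, <- M2, <- Nat.Div0.add_mod. f_equal. nia. Qed.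

Lemma Ec_mod n a lam s0 c y y' : y mod n = y' mod n -> Ec n a lam s0 c y -> Ec n a lam s0 c y'.
Proof. intros E [l [H1 [H2 H3]]]. exists l. rewrite <- E. auto. Qed.

Lemma Ec_down n a lam s0 c y : 0 < n -> n < c -> Ec n a lam s0 c y -> exists c', c - n <= c' < c /\ Ec n a lam s0 c' y.
Proof. intros Hn Hc [l [Hl [Hcr Hm]]].
  destruct (block (fun l => (list_sum l + length l * (n - s0)) mod n) n l) as [l1 [R [l2 [E [HR [HRl HK]]]]]].
  lia. intros; apply Nat.mod_upper_bound; lia.
  assert (HRm : (list_sum R + length R * (n - s0)) mod n = 0).
  { rewrite list_sum_app, length_app in HK.
    replace (list_sum l1 + list_sum R + (length l1 + length R) * (n - s0))
      with ((list_sum R + length R * (n - s0)) + (list_sum l1 + length l1 * (n - s0))) in HK by ring.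
    replace (list_sum l1 + length l1 * (n - s0)) with (0 + (list_sum l1 + length l1 * (n - s0))) in HK at 1 by lia.
    symmetry in HK. apply add_mod_cancel in HK; auto. rewrite HK. apply Nat.Div0.mod_0_l. }
  assert (HRlen : length R > 0) by (destruct R; simpl; [congruence|lia]).
  exists (c - length R). split. lia.
  exists (l1 ++ l2). subst l. rewrite !length_app in *. split. lia.
  split. rewrite !Forall_app in *. tauto.
  rewrite <- Hm. rewrite !list_sum_app.
  replace (list_sum l1 + (list_sum R + list_sum l2) + c * (n - s0))
    with ((list_sum l1 + list_sum l2 + (c - length R) * (n - s0)) + (list_sum R + length R * (n - s0))).
  symmetry. apply mod0_add; auto.
  assert (c - length R + length R = c) by lia.
  rewrite <- H at 2. ring. Qed.

Lemma Ec_n n a lam s0 c y : 0 < n -> critd n a lam s0 -> Ec n a lam s0 c y -> Ec n a lam s0 n y.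
Proof. intros Hn Hs. induction c as [c IH] using (well_founded_induction lt_wf). intro H.
  destruct (le_lt_dec c n). eapply Ec_up; eauto.
  destruct (Ec_down _ _ _ _ _ _ Hn l H) as [c' [Hc' H']]. apply (IH c'); auto. lia. Qed.

Lemma Ec_stable n a lam s0 c c' y : 0 < n -> critd n a lam s0 -> n <= c' -> Ec n a lam s0 c y -> Ec n a lam s0 c' y.
Proof. intros. eapply Ec_up; eauto. eapply Ec_n; eauto. Qed.

Lemma D_zero n a lam s0 : 0 < n -> critd n a lam s0 -> Ec n a lam s0 n 0.
Proof. intros. apply (Ec_n _ _ _ _ 0); auto. exists []. simpl. auto. Qed.

Lemma D_add n a lam s0 y1 y2 : 0 < n -> critd n a lam s0 -> Ec n a lam s0 n y1 -> Ec n a lam s0 n y2 -> Ec n a lam s0 n (y1 + y2).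
Proof. intros. apply (Ec_n _ _ _ _ (n + n)); auto. apply Ec_add; auto. Qed.

Lemma D_mul n a lam s0 y k : 0 < n -> critd n a lam s0 -> Ec n a lam s0 n y -> Ec n a lam s0 n (k * y).
Proof. intros. induction k. apply D_zero; auto. replace (S k * y) with (y + k * y) by ring. apply D_add; auto. Qed.

Lemma least_nat (P : nat -> Prop) : (exists k, P k) -> exists k, P k /\ forall j, j < k -> ~ P j.
Proof. intros [k Hk]. induction k as [k IH] using (well_founded_induction lt_wf).
  destruct (classic (exists j, j < k /\ P j)) as [[j [Hj Pj]]|H].
  - apply (IH j); auto.
  - exists k. split; auto. intros j Hj Pj. apply H. eauto. Qed.

Definition is_sigma n a lam s0 sigma := 0 < sigma /\
  forall k, Ec n a lam s0 n (k * (n - s0)) <-> Nat.divide sigma k.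

Lemma sigma_exists n a lam s0 : 0 < n -> critd n a lam s0 -> exists sigma, is_sigma n a lam s0 sigma.
Proof. intros Hn Hs.
  destruct (least_nat (fun k => 0 < k /\ Ec n a lam s0 n (k * (n - s0)))) as [sg [[Hsg HD] Hmin]].
  { exists n. split; auto. apply (Ec_mod _ _ _ _ _ 0). rewrite (Nat.mul_comm n), Nat.Div0.mod_mul, Nat.Div0.mod_0_l. reflexivity.
    apply D_zero; auto. }
  exists sg. split; auto. intro k. split.
  - intro Hk. destruct (Nat.eq_dec (k mod sg) 0) as [E|E].
    + exists (k / sg). pose proof (Nat.div_mod_eq k sg). lia.
    + exfalso. apply (Hmin (k mod sg)). apply Nat.mod_upper_bound; lia. split. lia.
      pose proof (D_mul _ _ _ _ _ ((n - 1) * (k / sg)) Hn Hs HD) as H2.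
      pose proof (D_add _ _ _ _ _ _ Hn Hs Hk H2) as H3.
      eapply Ec_mod; [|exact H3].
      apply (cong_mod _ _ _ 0 ((k/sg) * sg * (n - s0))). pose proof (Nat.div_mod_eq k sg).
      remember (k / sg) as q. remember (k mod sg) as r. destruct n; [lia|]. replace (S n - 1) with n by lia.
      rewrite H at 1. ring.
  - intros [q ->]. replace (q * sg * (n - s0)) with (q * (sg * (n - s0))) by ring. apply D_mul; auto. Qed.

Lemma crit_cycle_len n a lam s0 sg l : 0 < n -> critd n a lam s0 -> is_sigma n a lam s0 sg ->
  Forall (critd n a lam) l -> list_sum l mod n = 0 -> Nat.divide sg (length l).
Proof. intros Hn Hs [Hsg Hiff] Hl Hsum. apply Hiff. apply (Ec_n _ _ _ _ (length l)); auto.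
  exists l. split; auto. split; auto. rewrite Nat.add_comm. apply mod0_add; auto. Qed.

Lemma crit_cycle_exists n a lam s0 sg L : 0 < n -> critd n a lam s0 -> is_sigma n a lam s0 sg ->
  Nat.divide sg L -> n <= L -> exists l, length l = L /\ Forall (critd n a lam) l /\ list_sum l mod n = 0.
Proof. intros Hn Hs [Hsg Hiff] HL HnL. apply Hiff in HL.
  apply (Ec_stable _ _ _ _ _ L) in HL; auto. destruct HL as [l [H1 [H2 H3]]]. exists l. split; auto. split; auto.
  replace (L * (n - s0)) with (0 + L * (n - s0)) in H3 at 2 by lia. apply add_mod_cancel in H3; auto.
  rewrite H3. apply Nat.Div0.mod_0_l. Qed.

Lemma crit_shift n a lam s0 sg cs c' : 0 < n -> critd n a lam s0 -> is_sigma n a lam s0 sg ->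
  Forall (critd n a lam) cs -> (c' = length cs + sg \/ length cs = c' + sg) -> n <= c' ->
  exists cs', length cs' = c' /\ Forall (critd n a lam) cs' /\ list_sum cs' mod n = list_sum cs mod n.
Proof. intros Hn Hs [Hsg Hiff] Hcs Hc Hnc.
  set (c := length cs).
  assert (E : Ec n a lam s0 c (list_sum cs + c * (n - s0))) by (exists cs; auto).
  assert (Hfin : Ec n a lam s0 c' (list_sum cs + c' * (n - s0))).
  { destruct Hc as [Hc|Hc].
    - assert (Hd : Ec n a lam s0 n (sg * (n - s0))) by (apply Hiff; apply Nat.divide_refl).
      pose proof (Ec_add _ _ _ _ _ _ _ _ Hn E Hd). apply (Ec_stable _ _ _ _ _ c') in H; auto.
      eapply Ec_mod; [|exact H]. f_equal. subst c'. fold c. ring.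
    - assert (Hd : Ec n a lam s0 n ((n - 1) * sg * (n - s0))) by (apply Hiff; apply Nat.divide_factor_r).
      pose proof (Ec_add _ _ _ _ _ _ _ _ Hn E Hd). apply (Ec_stable _ _ _ _ _ c') in H; auto.
      eapply Ec_mod; [|exact H]. apply (cong_mod _ _ _ 0 (sg * (n - s0))). fold c in Hc. rewrite Hc.
      destruct n; [lia|]. replace (S n - 1) with n by lia. ring. }
  destruct Hfin as [l [H1 [H2 H3]]]. exists l. split; auto. split; auto. apply add_mod_cancel in H3; auto. Qed.

Open Scope R_scope.

Definition prodw (a : nat -> R) (lam : R) (ds : list nat) : R := fold_right Rmult 1 (map (fun d => a d / lam) ds).

Lemma prodw_app a lam l1 l2 : prodw a lam (l1 ++ l2) = prodw a lam l1 * prodw a lam l2.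
Proof. unfold prodw. rewrite map_app. induction l1; simpl. ring. rewrite IHl1. ring. Qed.

Lemma w_bounds n a lam d : Hyp n a lam -> (d < n)%nat -> 0 <= a d / lam <= 1.
Proof. intros H Hd. pose proof (lam_pos _ _ _ H). pose proof (H_a _ _ _ H d Hd). pose proof (a_le_lam _ _ _ H d Hd).
  split. unfold Rdiv; apply Rmult_le_pos; [lra|apply Rlt_le, Rinv_0_lt_compat; lra]. apply Rmult_le_reg_r with lam; auto. unfold Rdiv. rewrite Rmult_assoc, Rinv_l; lra. Qed.

Lemma prodw_bounds n a lam ds : Hyp n a lam -> Forall (fun d => d < n)%nat ds -> 0 <= prodw a lam ds <= 1.
Proof. intros H Hds. induction Hds; unfold prodw in *; simpl. lra.
  pose proof (w_bounds _ _ _ _ H H0). destruct IHHds. split. apply Rmult_le_pos; lra.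
  apply Rle_trans with (a x / lam * 1). apply Rmult_le_compat_l; lra. lra. Qed.

Lemma prodw_crit n a lam ds : Hyp n a lam -> Forall (critd n a lam) ds -> prodw a lam ds = 1.
Proof. intros H Hds. pose proof (lam_pos _ _ _ H). induction Hds; unfold prodw in *; simpl. auto.
  rewrite IHHds. destruct H1 as [_ ->]. field. lra. Qed.

Lemma prodw_lt1 n a lam ds : Hyp n a lam -> Forall (fun d => d < n)%nat ds -> Exists (fun d => a d <> lam) ds ->
  prodw a lam ds < 1.
Proof. intros H Hds HE. pose proof (lam_pos _ _ _ H) as Hl. induction Hds as [|x l Hx Hds IH].
  inversion HE.
  pose proof (prodw_bounds _ _ _ _ H Hds) as Hb. pose proof (w_bounds _ _ _ _ H Hx) as Hw.
  change (prodw a lam (x :: l)) with (a x / lam * prodw a lam l).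
  inversion HE as [? ? Hne|? ? HE']; subst.
  - pose proof (H_a _ _ _ H x Hx). pose proof (a_le_lam _ _ _ H x Hx).
    assert (a x / lam < 1). { apply Rmult_lt_reg_r with lam; auto. unfold Rdiv. rewrite Rmult_assoc, Rinv_l; lra. }
    apply Rle_lt_trans with (a x / lam * 1). apply Rmult_le_compat_l; lra. lra.
  - pose proof (IH HE').
    apply Rle_lt_trans with (1 * prodw a lam l). apply Rmult_le_compat_r; lra. lra. Qed.

Lemma fmax_ge x l : In x l -> x <= fold_right Rmax 0 l.
Proof. induction l; simpl; [tauto|]. intros [<-|H]. apply Rmax_l. eapply Rle_trans; [apply IHl; auto|apply Rmax_r]. Qed.

Lemma fmax_nonneg l : 0 <= fold_right Rmax 0 l.
Proof. induction l; simpl. lra. eapply Rle_trans; [exact IHl|apply Rmax_r]. Qed.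

Lemma fmax_cases l : fold_right Rmax 0 l = 0 \/ In (fold_right Rmax 0 l) l.
Proof. induction l; simpl; auto. destruct (Rle_dec a (fold_right Rmax 0 l)).
  rewrite Rmax_right by auto. destruct IHl as [E|E]; [left; auto|right; right; auto].
  rewrite Rmax_left by lra. right; left; auto. Qed.

Definition Bm n a lam : mat := mscale (circ n a) lam.

Lemma mpow_nonneg n a lam t i j : 0 <= mpow n (Bm n a lam) t i j.
Proof. destruct t; simpl. unfold mid. destruct (Nat.eqb i j); lra. apply fmax_nonneg. Qed.

Lemma mpow_up n a lam : Hyp n a lam -> forall ds i, (i < n)%nat -> Forall (fun d => d < n)%nat ds ->
  prodw a lam ds <= mpow n (Bm n a lam) (length ds) i ((i + list_sum ds) mod n).
Proof. intros H. pose proof (H_n _ _ _ H) as Hn. induction ds as [|d ds IH]; intros i Hi Hds.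
  - simpl. rewrite Nat.add_0_r, Nat.mod_small by auto. unfold mid. rewrite Nat.eqb_refl. unfold prodw. simpl. lra.
  - inversion Hds; subst. simpl length. simpl mpow. unfold mmul.
    assert (Hk : ((i + d) mod n < n)%nat) by (apply Nat.mod_upper_bound; lia).
    eapply Rle_trans; [|apply fmax_ge; apply in_map_iff; exists ((i + d) mod n)%nat; split; [reflexivity|apply in_seq; lia]].
    specialize (IH _ Hk H3). unfold prodw; simpl; fold (prodw a lam ds).
    replace ((i + (d + list_sum ds)) mod n)%nat with ((((i + d) mod n) + list_sum ds) mod n)%nat.
    unfold Bm, mscale. rewrite circ_off. rewrite off_step by auto.
    apply Rmult_le_compat_l; auto. apply (w_bounds _ _ _ _ H H2).
    rewrite Nat.Div0.add_mod_idemp_l. f_equal. lia. Qed.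

Lemma mpow_ex n a lam : Hyp n a lam -> forall t i j, (i < n)%nat ->
  mpow n (Bm n a lam) t i j = 0 \/ exists ds, length ds = t /\ Forall (fun d => d < n)%nat ds /\
    ((i + list_sum ds) mod n = j)%nat /\ prodw a lam ds = mpow n (Bm n a lam) t i j.
Proof. intros H. pose proof (H_n _ _ _ H) as Hn. induction t as [|t IH]; intros i j Hi.
  - simpl. unfold mid. destruct (Nat.eqb i j) eqn:E; auto. apply Nat.eqb_eq in E. subst. right.
    exists []. simpl. rewrite Nat.add_0_r, Nat.mod_small by auto. unfold prodw. simpl. auto.
  - simpl. unfold mmul. destruct (fmax_cases (map (fun k => Bm n a lam i k * mpow n (Bm n a lam) t k j) (seq 0 n))) as [E|E].
    left; auto. rewrite in_map_iff in E. destruct E as [k [Ek Hk]]. apply in_seq in Hk.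
    rewrite <- Ek. destruct (IH k j ltac:(lia)) as [E0|[ds [H1 [H2 [H3 H4]]]]].
    + left. rewrite E0. ring.
    + right. exists (off n i k :: ds). split; [simpl; auto|split; [constructor; auto; apply off_lt; auto|split]].
      * simpl. rewrite Nat.add_assoc, <- Nat.Div0.add_mod_idemp_l, step_off by lia. auto.
      * unfold prodw; simpl; fold (prodw a lam ds). rewrite H4. reflexivity. Qed.

Lemma mpow_le1 n a lam t i j : Hyp n a lam -> (i < n)%nat -> mpow n (Bm n a lam) t i j <= 1.
Proof. intros H Hi. destruct (mpow_ex _ _ _ H t i j Hi) as [E|[ds [_ [H2 [_ <-]]]]]. rewrite E; lra.
  apply (prodw_bounds _ _ _ _ H H2). Qed.

Open Scope R_scope.

Definition critb (a : nat -> R) (lam : R) (d : nat) : bool := if Req_EM_T (a d) lam then true else false.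

Lemma split_crit n a lam ds : Forall (fun d => d < n)%nat ds ->
  let cs := filter (critb a lam) ds in let ns := filter (fun d => negb (critb a lam d)) ds in
  length ds = (length cs + length ns)%nat /\ list_sum ds = (list_sum cs + list_sum ns)%nat /\
  prodw a lam ds = prodw a lam cs * prodw a lam ns /\ Forall (critd n a lam) cs /\ Forall (fun d => d < n)%nat ns.
Proof. intros Hds. induction Hds as [|d l Hd Hl IH]; simpl. unfold prodw; simpl. repeat split; auto. ring.
  destruct IH as [E1 [E2 [E3 [E4 E5]]]].
  destruct (critb a lam d) eqn:Ecb; simpl.
  - assert (Ha : a d = lam) by (unfold critb in Ecb; destruct (Req_EM_T (a d) lam); congruence).
    split. lia. split. lia. split.
    change (prodw a lam (d :: l)) with (a d / lam * prodw a lam l).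
    change (prodw a lam (d :: filter (critb a lam) l)) with (a d / lam * prodw a lam (filter (critb a lam) l)).
    rewrite E3. ring. split; auto. constructor; auto. split; auto.
  - split. lia. split. lia. split.
    change (prodw a lam (d :: l)) with (a d / lam * prodw a lam l).
    change (prodw a lam (d :: filter (fun d0 => negb (critb a lam d0)) l))
      with (a d / lam * prodw a lam (filter (fun d0 => negb (critb a lam d0)) l)).
    rewrite E3. ring. split; auto. Qed.

Lemma decode M x y x' y' : (0 < M)%nat -> (y < M)%nat -> (y' < M)%nat -> (x * M + y = x' * M + y')%nat -> x = x' /\ y = y'.
Proof. intros HM Hy Hy' E.
  assert (y = y'). { rewrite <- (Nat.mod_small y M), <- (Nat.mod_small y' M) by auto.
    rewrite <- (Nat.Div0.mod_add y x M), <- (Nat.Div0.mod_add y' x' M). f_equal. lia. }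
  subst. split; auto. apply (Nat.mul_cancel_r _ _ M); lia. Qed.

Lemma mod_congr_add n x x' y : (x mod n = x' mod n)%nat -> ((y + x) mod n = (y + x') mod n)%nat.
Proof. intro E. rewrite (Nat.Div0.add_mod y x), (Nat.Div0.add_mod y x'), E. auto. Qed.

Definition Tbound n sg := (n + sg + n * ((n + 1) * sg))%nat.

Lemma normalize n a lam s0 sg ds : Hyp n a lam -> critd n a lam s0 -> is_sigma n a lam s0 sg ->
  Forall (fun d => d < n)%nat ds -> (Tbound n sg <= length ds)%nat ->
  exists cs ns, Forall (critd n a lam) cs /\ Forall (fun d => d < n)%nat ns /\ (n + sg <= length cs)%nat /\
    (length cs + length ns = length ds)%nat /\ ((list_sum cs + list_sum ns) mod n = list_sum ds mod n)%nat /\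
    prodw a lam ds <= prodw a lam ns.
Proof. intros H Hs Hsg Hds HT. pose proof (H_n _ _ _ H) as Hn.
  destruct (split_crit n a lam ds Hds) as [E1 [E2 [E3 [E4 E5]]]].
  set (cs := filter (critb a lam) ds) in *. set (ns := filter (fun d => negb (critb a lam d)) ds) in *.
  assert (Hpcs : prodw a lam cs = 1) by (apply (prodw_crit n); auto).
  destruct (le_lt_dec (n + sg) (length cs)) as [Hle|Hlt].
  { exists cs, ns. split; auto. split; auto. split; auto. split. lia. split. rewrite E2; auto. rewrite E3, Hpcs. lra. }
  destruct Hsg as [Hsgp Hiff].
  set (M := ((n + 1) * sg)%nat). assert (HM : (0 < M)%nat) by (unfold M; nia).
  destruct (block (fun l => ((list_sum l mod n) * M + length l mod M)%nat) (n * M) ns) as [l1 [R [l2 [Ens [HR [HRl HK]]]]]].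
  { unfold Tbound in HT. fold M in HT. lia. }
  { intros i _. pose proof (Nat.mod_upper_bound (list_sum (firstn i ns)) n ltac:(lia)).
    pose proof (Nat.mod_upper_bound (length (firstn i ns)) M ltac:(lia)). nia. }
  apply decode in HK; [|auto|apply Nat.mod_upper_bound; lia|apply Nat.mod_upper_bound; lia].
  destruct HK as [HK1 HK2]. rewrite list_sum_app, length_app in *.
  assert (HRs : (list_sum R mod n = 0)%nat).
  { replace (list_sum l1) with (list_sum l1 + 0)%nat in HK1 at 1 by lia.
    rewrite !(Nat.add_comm (list_sum l1)) in HK1. apply add_mod_cancel in HK1; auto. rewrite <- HK1. apply Nat.Div0.mod_0_l. }
  assert (HRl2 : (length R mod M = 0)%nat).
  { replace (length l1) with (length l1 + 0)%nat in HK2 at 1 by lia.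
    rewrite !(Nat.add_comm (length l1)) in HK2. apply add_mod_cancel in HK2; auto. rewrite <- HK2. apply Nat.Div0.mod_0_l. }
  assert (HRpos : (0 < length R)%nat) by (destruct R; simpl; [congruence|lia]).
  assert (HMR : Nat.divide M (length R)) by (apply Nat.Lcm0.mod_divide; auto).
  assert (HsgR : Nat.divide sg (length R)) by (eapply Nat.divide_trans; [|exact HMR]; unfold M; apply Nat.divide_factor_r).
  assert (HRge : (M <= length R)%nat) by (apply Nat.divide_pos_le; auto).
  destruct (crit_cycle_exists n a lam s0 sg (length R) Hn Hs (conj Hsgp Hiff) HsgR) as [Z [HZ1 [HZ2 HZ3]]].
  { unfold M in HRge. nia. }
  assert (HnsF : Forall (fun d => d < n)%nat (l1 ++ R ++ l2)) by (rewrite <- Ens; auto).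
  rewrite !Forall_app in HnsF. destruct HnsF as [F1 [F2 F3]].
  exists (cs ++ Z), (l1 ++ l2). split; [apply Forall_app; auto|]. split; [apply Forall_app; auto|].
  split. rewrite length_app. unfold M in HRge. nia.
  split. rewrite E1, Ens, !length_app. lia.
  split. rewrite E2, Ens, !list_sum_app.
  replace (list_sum cs + list_sum Z + (list_sum l1 + list_sum l2))%nat
    with ((list_sum cs + list_sum l1 + list_sum l2) + list_sum Z)%nat by ring.
  replace (list_sum cs + (list_sum l1 + (list_sum R + list_sum l2)))%nat
    with ((list_sum cs + list_sum l1 + list_sum l2) + list_sum R)%nat by ring.
  rewrite (mod0_add n (list_sum Z)), (mod0_add n (list_sum R)) by auto. reflexivity.
  rewrite E3, Hpcs, Ens, !prodw_app. rewrite Rmult_1_l.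
  pose proof (prodw_bounds _ _ _ _ H F1). pose proof (prodw_bounds _ _ _ _ H F2). pose proof (prodw_bounds _ _ _ _ H F3).
  rewrite <- Rmult_assoc. apply Rmult_le_compat_r. lra.
  rewrite <- (Rmult_1_r (prodw a lam l1)) at 2. apply Rmult_le_compat_l; lra. Qed.

Lemma mpow_mono n a lam s0 sg L L' i j : Hyp n a lam -> critd n a lam s0 -> is_sigma n a lam s0 sg ->
  (Tbound n sg <= L)%nat -> (L' = L + sg \/ L = L' + sg)%nat -> (i < n)%nat ->
  mpow n (Bm n a lam) L i j <= mpow n (Bm n a lam) L' i j.
Proof. intros H Hs Hsg HT HL Hi. pose proof (H_n _ _ _ H) as Hn.
  destruct (mpow_ex _ _ _ H L i j Hi) as [E|[ds [Hl [Hds [Hj Hp]]]]].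
  { rewrite E. apply mpow_nonneg. }
  destruct (normalize n a lam s0 sg ds H Hs Hsg Hds ltac:(lia)) as [cs [ns [Hcs [Hns [Hc [Hlen [Hsum Hpr]]]]]]].
  destruct (crit_shift n a lam s0 sg cs (length cs + L' - L)%nat Hn Hs Hsg Hcs) as [cs' [H1 [H2 H3]]].
  { lia. } { lia. }
  assert (Hds' : Forall (fun d => d < n)%nat (cs' ++ ns)).
  { apply Forall_app; split; auto. eapply Forall_impl; [|exact H2]. intros x [? ?]; auto. }
  pose proof (mpow_up _ _ _ H (cs' ++ ns) i Hi Hds') as Hup.
  rewrite length_app in Hup. replace (length cs' + length ns)%nat with L' in Hup by lia.
  assert (Hm : ((i + list_sum (cs' ++ ns)) mod n = j)%nat).
  { rewrite <- Hj, list_sum_app. apply mod_congr_add. rewrite <- Hsum.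
    rewrite (Nat.Div0.add_mod (list_sum cs')), H3, <- Nat.Div0.add_mod. reflexivity. }
  rewrite Hm in Hup. rewrite prodw_app, (prodw_crit n a lam cs') in Hup by auto. lra. Qed.

Lemma periodic n a lam s0 sg : Hyp n a lam -> critd n a lam s0 -> is_sigma n a lam s0 sg ->
  ult_periodic n (fun t => mpow n (Bm n a lam) t) sg.
Proof. intros H Hs Hsg. exists (Tbound n sg). intros t Ht i j Hi Hj. apply Rle_antisym.
  - apply (mpow_mono n a lam s0 sg); auto. unfold Tbound in *. lia.
  - apply (mpow_mono n a lam s0 sg); auto. Qed.

Lemma critd_dec n a lam d : {critd n a lam d} + {~ critd n a lam d}.
Proof. unfold critd. destruct (lt_dec d n); [|right; tauto]. destruct (Req_EM_T (a d) lam); [left|right]; tauto. Qed.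

Lemma period_min n a lam s0 sg sg' : Hyp n a lam -> critd n a lam s0 -> is_sigma n a lam s0 sg ->
  (0 < sg')%nat -> ult_periodic n (fun t => mpow n (Bm n a lam) t) sg' -> (sg <= sg')%nat.
Proof. intros H Hs Hsg Hsg' [T HT]. pose proof (H_n _ _ _ H) as Hn. pose proof Hsg as [Hsgp _].
  set (t := (sg * (T + n))%nat).
  destruct (crit_cycle_exists n a lam s0 sg t Hn Hs Hsg) as [Z [HZ1 [HZ2 HZ3]]].
  { unfold t. apply Nat.divide_factor_l. } { unfold t. nia. }
  assert (HZlt : Forall (fun d => d < n)%nat Z) by (eapply Forall_impl; [|exact HZ2]; intros x [? ?]; auto).
  pose proof (mpow_up _ _ _ H Z 0 Hn HZlt) as Hup. rewrite (prodw_crit n) in Hup by auto.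
  rewrite HZ1 in Hup. simpl in Hup. rewrite HZ3 in Hup.
  pose proof (mpow_le1 n a lam t 0%nat 0%nat H Hn).
  assert (E1 : mpow n (Bm n a lam) t 0%nat 0%nat = 1) by lra.
  specialize (HT t ltac:(unfold t; nia) 0%nat 0%nat Hn Hn). simpl in HT. rewrite E1 in HT.
  destruct (mpow_ex _ _ _ H (t + sg')%nat 0%nat 0%nat Hn) as [E|[ds [Hl [Hds [Hj Hp]]]]].
  { rewrite HT in E. lra. }
  assert (Hcr : Forall (critd n a lam) ds).
  { apply NNPP. intro HF. apply neg_Forall_Exists_neg in HF; [|apply critd_dec].
    assert (HE : Exists (fun d => a d <> lam) ds).
    { rewrite Exists_exists in *. destruct HF as [x [Hx1 Hx2]]. exists x. split; auto.
      intro. apply Hx2. split; auto. rewrite Forall_forall in Hds. auto. }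
    pose proof (prodw_lt1 _ _ _ _ H Hds HE). lra. }
  simpl in Hj.
  pose proof (crit_cycle_len n a lam s0 sg ds Hn Hs Hsg Hcr Hj) as Hd.
  rewrite Hl in Hd. apply Nat.divide_add_cancel_r in Hd. apply Nat.divide_pos_le; auto.
  unfold t. apply Nat.divide_factor_l. Qed.

Open Scope nat_scope.

Lemma divmul x y z : Nat.divide y x -> Nat.divide y z -> (x / y) * z = x * (z / y).
Proof. intros [a ->] [b ->]. destruct y. simpl. rewrite !Nat.mul_0_r. auto.
  rewrite !Nat.div_mul by lia. ring. Qed.

Lemma div_chain x y z : Nat.divide y z -> Nat.divide z x -> 0 < y -> x / y = (x / z) * (z / y).
Proof. intros [a ->] [b ->] Hy. destruct a as [|a]. rewrite !Nat.mul_0_l, Nat.mul_0_r, Nat.Div0.div_0_l. auto.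
  rewrite Nat.div_mul by lia. rewrite Nat.mul_assoc, !Nat.div_mul by lia. auto. Qed.

Lemma div_divides_mul F x y : Nat.divide y x -> Nat.divide F (x / y) -> Nat.divide (F * y) x.
Proof. intros [a ->] HF. destruct y. rewrite Nat.mul_0_r. exists 0. auto.
  rewrite Nat.div_mul in HF by lia. apply Nat.mul_divide_mono_r. auto. Qed.

Lemma mul_divides_div F x y : 0 < y -> Nat.divide (F * y) x -> Nat.divide F (x / y).
Proof. intros Hy [k ->]. rewrite Nat.mul_assoc, Nat.div_mul by lia. apply Nat.divide_factor_r. Qed.

Lemma div_mono_div x y z : Nat.divide y z -> Nat.divide z x -> Nat.divide (z / y) (x / y).
Proof. intros [a ->] [b ->]. destruct y. rewrite !Nat.mul_0_r. simpl. apply Nat.divide_refl.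
  rewrite Nat.mul_assoc, !Nat.div_mul by lia. first [apply Nat.divide_factor_l | apply Nat.divide_factor_r]. Qed.

Lemma coprime_div F A B : Nat.divide F A -> Nat.gcd A B = 1 -> Nat.gcd F B = 1.
Proof. intros HF H. apply Nat.divide_1_r. rewrite <- H. apply Nat.gcd_greatest.
  eapply Nat.divide_trans; [apply Nat.gcd_divide_l|auto]. apply Nat.gcd_divide_r. Qed.

Lemma coprime_mul F x y : Nat.gcd F x = 1 -> Nat.gcd F y = 1 -> Nat.gcd F (x * y) = 1.
Proof. intros Hx Hy. set (c := Nat.gcd F (x * y)).
  assert (Hc1 : Nat.divide c F) by apply Nat.gcd_divide_l.
  assert (Hc2 : Nat.divide c (x * y)) by apply Nat.gcd_divide_r.
  assert (Nat.gcd c x = 1) by (apply (coprime_div _ F); auto).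
  assert (Nat.divide c y) by (apply (Nat.gauss _ x); auto).
  apply Nat.divide_1_r. rewrite <- Hy. apply Nat.gcd_greatest; auto. Qed.

Lemma fold_gcd_div_b b l : Nat.divide (fold_right Nat.gcd b l) b.
Proof. induction l; simpl. apply Nat.divide_refl. eapply Nat.divide_trans; [apply Nat.gcd_divide_r|auto]. Qed.

Lemma fold_gcd_div_in b l x : In x l -> Nat.divide (fold_right Nat.gcd b l) x.
Proof. induction l; simpl; [tauto|]. intros [<-|H]. apply Nat.gcd_divide_l.
  eapply Nat.divide_trans; [apply Nat.gcd_divide_r|auto]. Qed.

Lemma fold_gcd_greatest b l d : Nat.divide d b -> (forall x, In x l -> Nat.divide d x) -> Nat.divide d (fold_right Nat.gcd b l).
Proof. induction l; simpl; intros; auto. apply Nat.gcd_greatest; auto. Qed.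

Lemma gcd_list_snoc n l x : gcd_list n (l ++ [x]) = Nat.gcd (gcd_list n l) x.
Proof. induction l; simpl. apply Nat.gcd_comm. unfold gcd_list in *. rewrite IHl. apply Nat.gcd_assoc. Qed.

Lemma firstn_snoc (l : list nat) i : S i < length l -> firstn (S (S i)) l = firstn (S i) l ++ [nth (S i) l 0].
Proof. revert i; induction l as [|x l IH]; intros i H. simpl in H; lia. destruct i as [|i].
  - destruct l as [|y l]. simpl in H; lia. reflexivity.
  - rewrite firstn_cons, (firstn_cons (S i)), IH by (simpl in H; lia). reflexivity. Qed.

Lemma sorted_nth (ps : list nat) i j : StronglySorted gt ps -> i < j < length ps -> nth j ps 0 < nth i ps 0.
Proof. revert i j; induction ps as [|x l IH]; intros i j Hs Hij; simpl in *. lia.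
  apply StronglySorted_inv in Hs. destruct Hs as [Hs Hf]. destruct i, j; try lia.
  - rewrite Forall_forall in Hf. apply Hf. apply nth_In. lia.
  - apply IH; auto. lia. Qed.

Lemma combine_tl_in (ps : list nat) i : S i < length ps -> In (nth i ps 0, nth (S i) ps 0) (combine ps (tl ps)).
Proof. revert i; induction ps as [|x l IH]; intros i H; simpl in *. lia.
  destruct l as [|y l]; simpl in *. lia. destruct i. left; auto. right. apply (IH i). simpl. lia. Qed.

Lemma combine_tl_mem (ps : list nat) p q : In (p, q) (combine ps (tl ps)) -> In p ps /\ In q ps.
Proof. intro H. split. eapply in_combine_l; eauto. apply in_combine_r in H. destruct ps; simpl in *; auto. Qed.

Record NT (n : nat) (ps : list nat) : Prop := mkNT {
  nt_n : 0 < n; nt_ne : ps <> []; nt_sort : StronglySorted gt ps; nt_rng : forall p, In p ps -> 1 <= p < n }.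

Definition P_ (ps : list nat) i := nth i ps 0.
Definition G_ n (ps : list nat) i := gcd_list n (firstn (S i) ps).

Lemma P_in ps i : i < length ps -> In (P_ ps i) ps.
Proof. intro. apply nth_In; auto. Qed.

Lemma P_in_firstn ps i j : i < j -> j <= length ps -> In (P_ ps i) (firstn j ps).
Proof. intros Hij Hj. unfold P_.
  assert (E : nth i (firstn j ps) 0 = nth i ps 0) by (rewrite nth_firstn; apply Nat.ltb_lt in Hij; rewrite Hij; auto).
  rewrite <- E. apply nth_In. rewrite length_firstn. lia. Qed.

Lemma in_P ps q : In q ps -> exists i, i < length ps /\ q = P_ ps i.
Proof. intro H. apply In_nth with (d := 0) in H. destruct H as [i [Hi Hq]]. exists i. unfold P_. auto. Qed.

Lemma P0_hd ps : P_ ps 0 = hd 0 ps.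
Proof. destruct ps; reflexivity. Qed.

Lemma le_p1 n ps q : NT n ps -> In q ps -> q <= hd 0 ps.
Proof. intros H Hq. apply in_P in Hq. destruct Hq as [i [Hi ->]]. rewrite <- P0_hd.
  destruct i. lia. apply Nat.lt_le_incl. unfold P_. apply sorted_nth. apply H. lia. Qed.

Lemma G_pos n ps i : NT n ps -> 0 < G_ n ps i.
Proof. intro H. apply gcd_list_pos, H. Qed.

Lemma G_div_P n ps i j : NT n ps -> i <= j -> j < length ps -> Nat.divide (G_ n ps j) (P_ ps i).
Proof. intros H Hij Hj. apply gcd_list_divide_in. apply P_in_firstn; lia. Qed.

Lemma G_succ n ps i : S i < length ps -> G_ n ps (S i) = Nat.gcd (G_ n ps i) (P_ ps (S i)).
Proof. intro. unfold G_. rewrite firstn_snoc by auto. apply gcd_list_snoc. Qed.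

Lemma G_last n ps : ps <> [] -> G_ n ps (length ps - 1) = gcd_list n ps.
Proof. intro. unfold G_. destruct ps; [congruence|]. simpl length. replace (S (S (length ps) - 1)) with (length (n0 :: ps)) by (simpl; lia).
  rewrite firstn_all. auto. Qed.

Lemma G_zero n ps : ps <> [] -> G_ n ps 0 = Nat.gcd n (hd 0 ps).
Proof. intro. unfold G_. destruct ps; [congruence|]. simpl. apply Nat.gcd_comm. Qed.

Lemma G_mono n ps i j : i <= j -> Nat.divide (G_ n ps j) (G_ n ps i).
Proof. intro. unfold G_. apply gcd_list_greatest. apply gcd_list_divide_n.
  intros p Hp. apply gcd_list_divide_in. rewrite <- (firstn_skipn (S i) (firstn (S j) ps)), firstn_firstn.
  apply in_or_app. left. replace (Init.Nat.min (S i) (S j)) with (S i) by lia. auto. Qed.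

Definition gP n ps := fold_right Nat.gcd n (map (fun q => hd 0 ps - q) ps).

Lemma gP_n n ps : Nat.divide (gP n ps) n.
Proof. apply fold_gcd_div_b. Qed.

Lemma gP_q n ps q : In q ps -> Nat.divide (gP n ps) (hd 0 ps - q).
Proof. intro. apply fold_gcd_div_in. apply in_map_iff. eauto. Qed.


Lemma sg_div_u1 n ps sg : NT n ps -> (forall k, Nat.divide sg k <-> Nat.divide (gP n ps) (k * hd 0 ps)) ->
  Nat.divide sg (n / Nat.gcd n (hd 0 ps)).
Proof. intros H Hiff. apply Hiff. rewrite divmul by (apply Nat.gcd_divide_l || apply Nat.gcd_divide_r).
  apply Nat.divide_mul_l. apply gP_n. Qed.

Lemma sg_div_pair n ps sg p q : NT n ps -> (forall k, Nat.divide sg k <-> Nat.divide (gP n ps) (k * hd 0 ps)) ->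
  In p ps -> In q ps -> Nat.divide sg ((p - q) / Nat.gcd p q).
Proof. intros H Hiff Hp Hq. apply Hiff. pose proof (le_p1 n ps p H Hp). pose proof (le_p1 n ps q H Hq).
  set (e := (p - q) / Nat.gcd p q). set (p1 := hd 0 ps) in *.
  replace (e * p1) with (e * p + e * (p1 - p)) by (rewrite <- Nat.mul_add_distr_l; f_equal; lia).
  apply Nat.divide_add_r.
  - unfold e. rewrite divmul. apply Nat.divide_mul_l.
    replace (p - q) with ((p1 - q) - (p1 - p)) by lia. apply Nat.divide_sub_r; apply gP_q; auto.
    apply Nat.divide_sub_r; [apply Nat.gcd_divide_l|apply Nat.gcd_divide_r]. apply Nat.gcd_divide_l.
  - apply Nat.divide_mul_r. apply gP_q; auto. Qed.

Lemma sg_div_F3term n ps sg i : NT n ps -> (forall k, Nat.divide sg k <-> Nat.divide (gP n ps) (k * hd 0 ps)) ->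
  i < length ps -> Nat.divide sg ((hd 0 ps - P_ ps i) / G_ n ps i).
Proof. intros H Hiff Hi. apply Hiff. rewrite divmul.
  - apply Nat.divide_mul_l. apply gP_q. apply P_in; auto.
  - apply Nat.divide_sub_r. rewrite <- P0_hd. apply G_div_P; auto; lia. apply G_div_P; auto; lia.
  - rewrite <- P0_hd. apply G_div_P; auto; lia. Qed.

Lemma F3_terms n ps x : NT n ps ->
  In x (map (fun j => (hd 0 ps - nth (j - 1) ps 0) / gcd_list n (firstn j ps)) (seq 2 (length ps - 1))) ->
  exists i, 1 <= i < length ps /\ x = (hd 0 ps - P_ ps i) / G_ n ps i.
Proof. intros H Hx. apply in_map_iff in Hx. destruct Hx as [j [<- Hj]]. apply in_seq in Hj.
  exists (j - 1). split. lia. unfold P_, G_. replace (S (j - 1)) with j by lia. auto. Qed.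

Lemma F3_term_in n ps i : 1 <= i < length ps ->
  In ((hd 0 ps - P_ ps i) / G_ n ps i) (map (fun j => (hd 0 ps - nth (j - 1) ps 0) / gcd_list n (firstn j ps)) (seq 2 (length ps - 1))).
Proof. intro. apply in_map_iff. exists (S i). split. unfold P_, G_. replace (S i - 1) with i by lia. auto.
  apply in_seq. lia. Qed.

Lemma sg_div_F1 n ps sg : NT n ps -> (forall k, Nat.divide sg k <-> Nat.divide (gP n ps) (k * hd 0 ps)) ->
  Nat.divide sg (per_formula1 n ps).
Proof. intros H Hiff. unfold per_formula1. apply fold_gcd_greatest. apply sg_div_u1; auto.
  intros x Hx. apply in_map_iff in Hx. destruct Hx as [q [<- Hq]].
  assert (In q ps) by (destruct ps; simpl in *; auto).
  apply (sg_div_pair n ps); auto. destruct ps; [exfalso; apply (nt_ne _ _ H); auto|]. left; auto. Qed.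

Lemma sg_div_F2 n ps sg : NT n ps -> (forall k, Nat.divide sg k <-> Nat.divide (gP n ps) (k * hd 0 ps)) ->
  Nat.divide sg (per_formula2 n ps).
Proof. intros H Hiff. unfold per_formula2. apply fold_gcd_greatest. apply sg_div_u1; auto.
  intros x Hx. apply in_map_iff in Hx. destruct Hx as [[p q] [<- Hpq]]. apply combine_tl_mem in Hpq.
  apply (sg_div_pair n ps); tauto. Qed.

Lemma sg_div_F3 n ps sg : NT n ps -> (forall k, Nat.divide sg k <-> Nat.divide (gP n ps) (k * hd 0 ps)) ->
  Nat.divide sg (per_formula3 n ps).
Proof. intros H Hiff. unfold per_formula3. apply fold_gcd_greatest. apply sg_div_u1; auto.
  intros x Hx. apply F3_terms in Hx; auto. destruct Hx as [i [Hi ->]]. apply sg_div_F3term; auto. lia. Qed.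

Lemma F1_div_F3 n ps : NT n ps -> Nat.divide (per_formula1 n ps) (per_formula3 n ps).
Proof. intro H. unfold per_formula3. apply fold_gcd_greatest. apply fold_gcd_div_b.
  intros x Hx. apply F3_terms in Hx; auto. destruct Hx as [i [Hi ->]].
  assert (Hne := nt_ne _ _ H). destruct ps as [|p1 rest]; [congruence|].
  assert (Hq : In (P_ (p1 :: rest) i) rest).
  { unfold P_. destruct i; [lia|]. simpl. apply nth_In. simpl in Hi. lia. }
  assert (Hd : Nat.divide (per_formula1 n (p1 :: rest)) ((p1 - P_ (p1 :: rest) i) / Nat.gcd p1 (P_ (p1 :: rest) i))).
  { unfold per_formula1. apply fold_gcd_div_in. simpl tl. apply in_map_iff. eexists; split; eauto. }
  simpl hd. rewrite (div_chain _ _ (Nat.gcd p1 (P_ (p1 :: rest) i))).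
  - apply Nat.divide_mul_l. exact Hd.
  - apply Nat.gcd_greatest. replace p1 with (P_ (p1 :: rest) 0) by auto. apply G_div_P; auto; lia. apply G_div_P; auto; lia.
  - apply Nat.divide_sub_r. apply Nat.gcd_divide_l. apply Nat.gcd_divide_r.
  - apply G_pos; auto. Qed.

Lemma F2_G n ps F : NT n ps ->
  (forall p q, In (p, q) (combine ps (tl ps)) -> Nat.divide F ((p - q) / Nat.gcd p q)) ->
  forall i, i < length ps -> Nat.divide (F * G_ n ps i) (hd 0 ps - P_ ps i).
Proof. intros H HF. induction i; intro Hi.
  - rewrite <- P0_hd, Nat.sub_diag. apply Nat.divide_0_r.
  - rewrite G_succ by auto. set (g' := Nat.gcd (G_ n ps i) (P_ ps (S i))).
    assert (Hlt : P_ ps (S i) < P_ ps i) by (apply sorted_nth; [apply H|lia]).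
    assert (Hle : P_ ps i <= hd 0 ps) by (apply (le_p1 n); auto; apply P_in; lia).
    replace (hd 0 ps - P_ ps (S i)) with ((hd 0 ps - P_ ps i) + (P_ ps i - P_ ps (S i))) by lia.
    assert (Hg'1 : Nat.divide g' (G_ n ps i)) by apply Nat.gcd_divide_l.
    apply Nat.divide_add_r.
    + eapply Nat.divide_trans; [|apply IHi; lia]. apply Nat.mul_divide_mono_l. auto.
    + set (z := Nat.gcd (P_ ps i) (P_ ps (S i))).
      assert (Hz : Nat.divide g' z).
      { apply Nat.gcd_greatest. eapply Nat.divide_trans; [exact Hg'1|]. apply G_div_P; auto; lia.
        apply Nat.gcd_divide_r. }
      eapply Nat.divide_trans; [apply Nat.mul_divide_mono_l; exact Hz|].
      apply div_divides_mul. apply Nat.divide_sub_r; [apply Nat.gcd_divide_l|apply Nat.gcd_divide_r].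
      apply HF. unfold P_. apply combine_tl_in. auto. Qed.

Lemma F2_div_F3 n ps : NT n ps -> Nat.divide (per_formula2 n ps) (per_formula3 n ps).
Proof. intro H. unfold per_formula3. apply fold_gcd_greatest. apply fold_gcd_div_b.
  intros x Hx. apply F3_terms in Hx; auto. destruct Hx as [i [Hi ->]].
  apply mul_divides_div. apply G_pos; auto. apply F2_G; auto.
  intros p q Hpq. unfold per_formula2. apply fold_gcd_div_in. apply in_map_iff. exists (p, q). auto. lia. Qed.

Lemma F3_div_terms n ps i : NT n ps -> i < length ps -> Nat.divide (per_formula3 n ps) ((hd 0 ps - P_ ps i) / G_ n ps i).
Proof. intros H Hi. destruct i. rewrite <- P0_hd, Nat.sub_diag, Nat.Div0.div_0_l. apply Nat.divide_0_r.
  unfold per_formula3. apply fold_gcd_div_in. apply F3_term_in. lia. Qed.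

Lemma coprime_G n ps F : NT n ps -> (forall i, i < length ps -> Nat.divide F ((hd 0 ps - P_ ps i) / G_ n ps i)) ->
  forall i, i < length ps -> Nat.gcd F (G_ n ps 0 / G_ n ps i) = 1.
Proof. intros H HF. induction i; intro Hi.
  - rewrite Nat.div_same by (pose proof (G_pos n ps 0 H); lia). apply Nat.divide_1_r; apply Nat.gcd_divide_r.
  - set (g' := G_ n ps (S i)).
    assert (Hg'pos : 0 < g') by (apply G_pos; auto).
    assert (Hg'i : Nat.divide g' (G_ n ps i)) by (apply G_mono; lia).
    rewrite (div_chain _ _ (G_ n ps i)); auto. 2: apply G_mono; lia.
    apply coprime_mul. apply IHi; lia.
    set (c := Nat.gcd F (G_ n ps i / g')).
    assert (Hc1 : Nat.divide c F) by apply Nat.gcd_divide_l.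
    assert (Hc2 : Nat.divide c (G_ n ps i / g')) by apply Nat.gcd_divide_r.
    set (p1 := hd 0 ps). set (q := P_ ps (S i)).
    assert (Hgp1 : Nat.divide g' p1) by (unfold p1; rewrite <- P0_hd; apply G_div_P; auto; lia).
    assert (Hgq : Nat.divide g' q) by (apply G_div_P; auto).
    assert (Hip1 : Nat.divide (G_ n ps i) p1) by (unfold p1; rewrite <- P0_hd; apply G_div_P; auto; lia).
    assert (Hqle : q <= p1) by (apply (le_p1 n); auto; apply P_in; auto).
    assert (HcA : Nat.divide c (p1 / g')) by (eapply Nat.divide_trans; [exact Hc2|]; apply div_mono_div; auto).
    assert (HcAB : Nat.divide c (p1 / g' - q / g')).
    { eapply Nat.divide_trans; [exact Hc1|]. destruct Hgp1 as [A HA]. destruct Hgq as [B HB].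
      specialize (HF (S i) Hi). fold g' p1 q in HF. rewrite HA, HB in *.
      rewrite !Nat.div_mul by lia. rewrite <- Nat.mul_sub_distr_r, Nat.div_mul in HF by lia. auto. }
    assert (HcB : Nat.divide c (q / g')).
    { replace (q / g') with (p1 / g' - (p1 / g' - q / g')).
      apply Nat.divide_sub_r; auto. assert (q / g' <= p1 / g') by (apply Nat.Div0.div_le_mono; auto). lia. }
    apply Nat.divide_1_r. rewrite <- (Nat.gcd_div_gcd (G_ n ps i) q g') by (unfold g'; try lia; apply G_succ; auto).
    apply Nat.gcd_greatest; auto. Qed.

Lemma F3_div_sg n ps sg : NT n ps -> (forall k, Nat.divide sg k <-> Nat.divide (gP n ps) (k * hd 0 ps)) ->
  Nat.divide (per_formula3 n ps) sg.
Proof. intros H Hiff. set (F := per_formula3 n ps). set (p1 := hd 0 ps). set (m := gcd_list n ps).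
  set (h := Nat.gcd n p1). pose proof (nt_n _ _ H) as Hn. pose proof (nt_ne _ _ H) as Hne.
  assert (Hmpos : 0 < m) by (apply gcd_list_pos; auto).
  assert (Hp1 : In p1 ps) by (unfold p1; destruct ps; [congruence|left; auto]).
  assert (Hp1pos : 1 <= p1) by (apply (nt_rng _ _ H); auto).
  assert (Hhpos : 0 < h) by (unfold h; destruct (Nat.gcd n p1) eqn:E; [apply Nat.gcd_eq_0 in E; lia|lia]).
  assert (HFterms : forall i, i < length ps -> Nat.divide F ((p1 - P_ ps i) / G_ n ps i)) by (intros; apply F3_div_terms; auto).
  assert (HFu1 : Nat.divide F (n / h)) by apply fold_gcd_div_b.
  assert (Hmh : Nat.divide m h) by (apply Nat.gcd_greatest; [apply gcd_list_divide_n|apply gcd_list_divide_in; auto]).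
  assert (Hhp1 : Nat.divide h p1) by apply Nat.gcd_divide_r.
  assert (HmG : forall i, Nat.divide m (G_ n ps i)).
  { intro i. apply gcd_list_greatest. apply gcd_list_divide_n. intros p Hp. apply gcd_list_divide_in.
    rewrite <- (firstn_skipn (S i) ps). apply in_or_app. left. auto. }
  assert (Hal : forall q, In q ps -> Nat.divide (F * m) (p1 - q)).
  { intros q Hq. apply in_P in Hq. destruct Hq as [i [Hi ->]].
    eapply Nat.divide_trans; [apply Nat.mul_divide_mono_l, (HmG i)|].
    apply div_divides_mul; auto. apply Nat.divide_sub_r; unfold p1; [rewrite <- P0_hd|]; apply G_div_P; auto; lia. }
  assert (Hbe : Nat.divide (F * m) n).
  { eapply Nat.divide_trans; [apply Nat.mul_divide_mono_l; exact Hmh|].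
    apply div_divides_mul; auto. apply Nat.gcd_divide_l. }
  assert (Hg : Nat.divide (F * m) (gP n ps)).
  { apply fold_gcd_greatest; auto. intros x Hx. apply in_map_iff in Hx. destruct Hx as [q [<- Hq]]. apply Hal; auto. }
  assert (Hsgp1 : Nat.divide (gP n ps) (sg * p1)) by (apply Hiff; apply Nat.divide_refl).
  assert (H1 : Nat.divide (F * m) ((sg * (p1 / m)) * m)).
  { eapply Nat.divide_trans; [exact Hg|]. destruct (gcd_list_divide_in n ps p1 Hp1) as [k Hk]. fold m in Hk.
    replace ((sg * (p1 / m)) * m) with (sg * p1); auto. rewrite Hk, Nat.div_mul by lia. ring. }
  apply Nat.mul_divide_cancel_r in H1; [|lia].
  assert (Hc1 : Nat.gcd F (p1 / h) = 1).
  { apply (coprime_div _ (n / h)); auto. apply (Nat.gcd_div_gcd n p1 h); auto. lia. }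
  assert (Hc2 : Nat.gcd F (h / m) = 1).
  { pose proof (coprime_G n ps F H HFterms (length ps - 1) ltac:(destruct ps; [congruence|simpl; lia])) as Hc.
    rewrite G_last, G_zero in Hc by auto. exact Hc. }
  assert (Hc : Nat.gcd F (p1 / m) = 1).
  { rewrite (div_chain _ _ h); auto. apply coprime_mul; auto. }
  apply (Nat.gauss _ (p1 / m)); auto. rewrite Nat.mul_comm; auto. Qed.

Lemma formulas n ps sg : NT n ps -> (forall k, Nat.divide sg k <-> Nat.divide (gP n ps) (k * hd 0 ps)) ->
  sg = per_formula1 n ps /\ sg = per_formula2 n ps /\ sg = per_formula3 n ps.
Proof. intros H Hiff.
  assert (E3 : sg = per_formula3 n ps) by (apply Nat.divide_antisym; [apply sg_div_F3|apply F3_div_sg]; auto).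
  split; [|split; auto].
  - apply Nat.divide_antisym. apply sg_div_F1; auto. rewrite E3. apply F1_div_F3; auto.
  - apply Nat.divide_antisym. apply sg_div_F2; auto. rewrite E3. apply F2_div_F3; auto. Qed.

Open Scope R_scope.

Lemma divm_step n m u d : (0 < n)%nat -> (0 < m)%nat -> Nat.divide m n -> Nat.divide m d ->
  (((u + d) mod n) mod m = u mod m)%nat.
Proof. intros Hn Hm Hmn [k ->]. rewrite mod_mod_div by auto. apply Nat.Div0.mod_add. Qed.

Lemma walk_comp n m r ds v : (0 < n)%nat -> (0 < m)%nat -> Nat.divide m n ->
  Forall (fun d => Nat.divide m d) ds -> (v < n)%nat -> (v mod m = r)%nat -> Forall (comp_nodes n m r) (wnodes n v ds).
Proof. intros Hn Hm Hmn. revert v. induction ds as [|d ds IH]; intros v Hds Hv Hvr; simpl; constructor.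
  split; auto. inversion Hds; subst. apply IH; auto. apply Nat.mod_upper_bound; lia.
  rewrite divm_step; auto. Qed.

Lemma pedges_crit n a lam v ds : Hyp n a lam -> (v < n)%nat -> Forall (critd n a lam) ds ->
  Forall (fun e => crit_edge n (circ n a) lam (fst e) (snd e)) (pedges n v ds).
Proof. intros H. pose proof (H_n _ _ _ H). revert v. induction ds as [|d ds IH]; intros v Hv Hds; simpl; constructor;
  inversion Hds as [|? ? [Hd Had] Hds']; subst.
  - simpl. apply crit_edge_iff; auto. split; auto. split. apply Nat.mod_upper_bound; lia. rewrite off_step; auto.
  - apply IH; auto. apply Nat.mod_upper_bound; lia. Qed.

Lemma reach_mod n a lam m u v : Hyp n a lam -> (0 < m)%nat -> Nat.divide m n ->
  (forall d, critd n a lam d -> Nat.divide m d) ->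
  clos_refl_trans nat (crit_edge n (circ n a) lam) u v -> (u mod m = v mod m)%nat.
Proof. intros H Hm Hmn Hcd Hr. pose proof (H_n _ _ _ H). induction Hr; auto; [|congruence].
  apply crit_edge_iff in H1; auto. destruct H1 as [Hx [Hy Ha]].
  rewrite <- (step_off n x y) by auto. rewrite divm_step; auto. apply Hcd. split; auto. apply off_lt; auto. Qed.

Lemma divm_off n m u v : (0 < n)%nat -> (0 < m)%nat -> Nat.divide m n -> (u < n)%nat -> (v < n)%nat ->
  (u mod m = v mod m)%nat -> Nat.divide m (off n u v).
Proof. intros Hn Hm Hmn Hu Hv E. unfold off. apply mod_div_iff; auto. apply Nat.Lcm0.mod_divide.
  assert (((v + n - u) + u) mod m = (0 + u) mod m)%nat.
  { replace (v + n - u + u)%nat with (v + n)%nat by lia. simpl. rewrite E.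
    destruct Hmn as [k ->]. rewrite Nat.Div0.mod_add. auto. }
  apply add_mod_cancel in H; auto. rewrite H. apply Nat.Div0.mod_0_l. Qed.

Lemma comp_shift n m r1 r2 v : (0 < n)%nat -> (0 < m)%nat -> Nat.divide m n -> (r1 < m)%nat -> (r2 < m)%nat ->
  comp_nodes n m r1 v -> comp_nodes n m r2 ((v + (r2 + n - r1)) mod n).
Proof. intros Hn Hm [k Hk] H1 H2 [Hv Hvr]. split. apply Nat.mod_upper_bound; lia.
  rewrite mod_mod_div by (auto; exists k; auto). rewrite <- (Nat.mod_small r2 m) at 2 by auto.
  pose proof (Nat.div_mod_eq v m). apply (cong_mod _ _ _ 0 (v / m + k)). rewrite Hvr in H. nia. Qed.

Lemma critd_in n a lam ps d : (forall t, In t ps <-> ((1 <= t < n)%nat /\ a t = lam)) -> a 0%nat <> lam ->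
  critd n a lam d -> In d ps.
Proof. intros Hps H0 [Hd Had]. apply Hps. split; auto. destruct d. congruence. lia. Qed.

Lemma Ec_gP n a lam ps c y : NT n ps -> (forall t, In t ps <-> ((1 <= t < n)%nat /\ a t = lam)) -> a 0%nat <> lam ->
  Ec n a lam (hd 0%nat ps) c y -> Nat.divide (gP n ps) y.
Proof. intros H Hps H0 [l [Hl [Hc Hm]]]. pose proof (nt_n _ _ H) as Hn. set (p1 := hd 0%nat ps) in *.
  assert (Hp1 : (p1 < n)%nat).
  { apply (nt_rng _ _ H). unfold p1. destruct ps; [exfalso; apply (nt_ne _ _ H); auto|left; auto]. }
  apply (mod_div_iff n); auto. apply gP_n. rewrite <- Hm. apply mod_div_iff; auto. apply gP_n. subst c. clear Hm.
  induction Hc as [|d l Hd Hl IH]; simpl. apply Nat.divide_0_r.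
  match goal with |- Nat.divide _ ?X => replace X with ((d + (n - p1)) + (list_sum l + length l * (n - p1)))%nat by lia end.
  assert (Hdd : Nat.divide (gP n ps) (d + (n - p1))).
  { apply critd_in with (ps := ps) in Hd; auto.
    pose proof (le_p1 n ps d H Hd). fold p1 in H1.
    apply (Nat.divide_add_cancel_r _ (p1 - d)). apply gP_q; auto.
    replace (p1 - d + (d + (n - p1)))%nat with n by lia. apply gP_n. }
  apply Nat.divide_add_r; auto. Qed.

Lemma gP_Ec n a lam ps y : NT n ps -> (forall t, In t ps <-> ((1 <= t < n)%nat /\ a t = lam)) ->
  Nat.divide (gP n ps) y -> Ec n a lam (hd 0%nat ps) n y.
Proof. intros H Hps [k ->]. pose proof (nt_n _ _ H) as Hn. set (p1 := hd 0%nat ps).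
  assert (Hp1 : In p1 ps) by (unfold p1; destruct ps; [exfalso; apply (nt_ne _ _ H); auto|left; auto]).
  assert (Hs : critd n a lam p1) by (apply Hps in Hp1; split; [lia|tauto]).
  apply (bez_list n (fun y => Ec n a lam p1 n y) (map (fun q => p1 - q)%nat ps)); auto.
  - intros. apply D_add; auto.
  - intros x j Hx. eapply Ec_mod; [|exact Hx]. apply Nat.Div0.mod_add.
  - intro k'. apply (Ec_mod _ _ _ _ _ 0). rewrite Nat.Div0.mod_mul, Nat.Div0.mod_0_l. auto. apply D_zero; auto.
  - intros x Hx k'. apply D_mul; auto. apply in_map_iff in Hx. destruct Hx as [q [<- Hq]].
    assert (Hqc : critd n a lam q) by (apply Hps in Hq; split; [lia|tauto]).
    pose proof (le_p1 n ps q H Hq). fold p1 in H0.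
    assert (Hp1r : (1 <= p1 < n)%nat) by (apply Hps in Hp1; tauto).
    assert (E : Ec n a lam p1 n (q + (n - 1) * p1)).
    { exists (q :: repeat p1 (n - 1)). split. simpl. rewrite repeat_length. lia.
      split. constructor; auto. apply Forall_forall. intros x Hx. apply repeat_spec in Hx. subst; auto.
      simpl list_sum. rewrite list_sum_repeat.
      apply (cong_mod _ _ _ 0 (n - p1)). replace (S (n - 1)) with n by lia. ring. }
    apply (D_mul _ _ _ _ _ (n - 1)) in E; auto.
    eapply Ec_mod; [|exact E]. apply (cong_mod _ _ _ 0 (q + (n - 2) * p1)).
    destruct n as [|[|n']]; [lia|lia|]. replace (S (S n') - 1)%nat with (S n') by lia.
    replace (S (S n') - 2)%nat with n' by lia. nia. Qed.

Close Scope nat_scope.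
Open Scope R_scope.

Theorem proposition3 (n : nat) (a : nat -> R) (lam : R) (ps : list nat)
  (Ha_nonneg : forall t, (t < n)%nat -> 0 <= a t)
  (HA_nz : exists t, (t < n)%nat /\ a t <> 0)
  (Hlam : is_lambda n (circ n a) lam)
  (Hps_sorted : StronglySorted gt ps)
  (Hps : forall t, In t ps <-> ((1 <= t < n)%nat /\ a t = lam)) :
  let A := circ n a in
  let m := gcd_list n ps in
  (* (i) *)
  ((forall v, (v < n)%nat -> crit_node n A lam v) /\
   (forall u v, (u < n)%nat -> (v < n)%nat ->
      (crit_scc n A lam u v <-> (u mod m = v mod m)%nat)) /\
   (forall r1 r2, (r1 < m)%nat -> (r2 < m)%nat ->
      exists f : nat -> nat,
        (forall v, comp_nodes n m r1 v -> comp_nodes n m r2 (f v)) /\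
        (forall u v, comp_nodes n m r1 u -> comp_nodes n m r1 v -> f u = f v -> u = v) /\
        (forall w, comp_nodes n m r2 w -> exists v, comp_nodes n m r1 v /\ f v = w) /\
        (forall u v, comp_nodes n m r1 u -> comp_nodes n m r1 v ->
           (crit_edge n A lam u v <-> crit_edge n A lam (f u) (f v))))) /\
  (* (ii) *)
  (exists sigma : nat,
     is_ult_period n (fun t => mpow n (mscale A lam) t) sigma /\
     (forall r, (r < m)%nat -> is_gcd_of (comp_cycle_length n A lam m r) sigma) /\
     (a 0%nat = lam -> sigma = 1%nat) /\
     (a 0%nat <> lam ->
        sigma = per_formula1 n ps /\ sigma = per_formula2 n ps /\
        sigma = per_formula3 n ps)).
Proof.
  intros A m. subst A.
  assert (Hn : (0 < n)%nat) by (destruct HA_nz as [t [Ht _]]; lia).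
  assert (H : Hyp n a lam) by (constructor; auto).
  pose proof (lam_pos _ _ _ H) as Hlp.
  assert (Hmpos : (0 < m)%nat) by (apply gcd_list_pos; auto).
  assert (Hmn : Nat.divide m n) by apply gcd_list_divide_n.
  assert (Hmle : (m <= n)%nat) by (apply Nat.divide_pos_le; auto).
  assert (Hcd : forall d, critd n a lam d -> Nat.divide m d).
  { intros d [Hd Had]. destruct d. apply Nat.divide_0_r. apply gcd_list_divide_in. apply Hps. split; [lia|auto]. }
  assert (Hpsc : forall p, In p ps -> (p < n)%nat /\ a p = lam) by (intros p Hp; apply Hps in Hp; split; [lia|tauto]).
  assert (Hs0 : exists s0, critd n a lam s0 /\ (a 0%nat = lam -> s0 = 0%nat) /\
            (a 0%nat <> lam -> s0 = hd 0%nat ps /\ ps <> [])).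
  { destruct (Req_EM_T (a 0%nat) lam) as [E|E].
    - exists 0%nat. split. split; auto. split; auto. intro; congruence.
    - destruct (crit_exists _ _ _ H) as [t [Ht Hat]].
      assert (Hin : In t ps) by (apply Hps; split; [destruct t; [congruence|lia]|auto]).
      assert (Hne : ps <> []) by (intro E'; rewrite E' in Hin; inversion Hin).
      exists (hd 0%nat ps). split.
      + assert (Hh : In (hd 0%nat ps) ps) by (destruct ps; [congruence|left; auto]).
        apply Hpsc in Hh. split; tauto.
      + split. intro; congruence. intro; auto. }
  destruct Hs0 as [s0 [Hs0 [Hs0a Hs0b]]].
  destruct (sigma_exists n a lam s0 Hn Hs0) as [sg Hsg].
  assert (Hnode : forall v, (v < n)%nat -> crit_node n (circ n a) lam v).
  { intros v Hv. exists (wnodes n v (repeat s0 n)). split.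
    - apply crit_walk; auto. apply Forall_forall; intros x Hx; apply repeat_spec in Hx; subst; auto.
      apply repeat_ne; auto. apply wend_repeat; auto.
    - destruct n; [lia|]. simpl; left; auto. }
  split; [split; [|split]|].
  - exact Hnode.
  - intros u v Hu Hv. split.
    + intros [_ [_ [Hr _]]]. apply (reach_mod n a lam m); auto.
    + intro E. split; [auto|split; [auto|split]].
      * destruct (divm_off n m u v Hn Hmpos Hmn Hu Hv E) as [k Hk].
        pose proof (reach_gcd n a lam ps H Hpsc k u Hu) as R. fold m in R. rewrite <- Hk, step_off in R by auto. exact R.
      * destruct (divm_off n m v u Hn Hmpos Hmn Hv Hu (eq_sym E)) as [k Hk].
        pose proof (reach_gcd n a lam ps H Hpsc k v Hv) as R. fold m in R. rewrite <- Hk, step_off in R by auto. exact R.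
  - intros r1 r2 Hr1 Hr2. exists (fun v => ((v + (r2 + n - r1)) mod n)%nat). split; [|split; [|split]].
    + intros v Hv. apply comp_shift; auto.
    + intros u v [Hu _] [Hv _] E. apply add_mod_cancel in E; auto. rewrite !Nat.mod_small in E; auto.
    + intros w Hw. exists ((w + (r1 + n - r2)) mod n)%nat. split. apply comp_shift; auto.
      destruct Hw as [Hw _]. rewrite Nat.Div0.add_mod_idemp_l. rewrite <- (Nat.mod_small w n) at 2 by auto.
      apply (cong_mod _ _ _ 0 2). lia.
    + intros u v [Hu _] [Hv _]. rewrite !crit_edge_iff by auto. rewrite off_shift by auto.
      split; intros [? [? ?]]; repeat split; auto; apply Nat.mod_upper_bound; lia.
  - exists sg. split; [|split; [|split]].
    + split. apply Hsg. split. apply (periodic n a lam s0 sg); auto.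
      intros sg' Hsg' Hp. apply (period_min n a lam s0 sg sg'); auto.
    + intros r Hr. split.
      * intros k [c [Hc [Hcn [Hce Hk]]]]. subst k.
        assert (Hclt : Forall (fun x => x < n)%nat c) by (eapply Forall_impl; [|exact Hcn]; intros x [? ?]; auto).
        assert (Hdsc : Forall (critd n a lam) (map (fun e => off n (fst e) (snd e)) (cycle_edges c))).
        { apply Forall_map. eapply Forall_impl; [|exact Hce]. intros [u v] He. apply crit_edge_iff in He; auto.
          destruct He as [? [? ?]]. split; auto. apply off_lt; auto. }
        pose proof (crit_cycle_len n a lam s0 sg _ Hn Hs0 Hsg Hdsc (cycle_sum n c Hn Hc Hclt)) as Hd.
        rewrite length_map, cycle_edges_length in Hd by auto. exact Hd.
      * intros d Hd.
        assert (Hcyc : forall L, Nat.divide sg L -> (n <= L)%nat -> comp_cycle_length n (circ n a) lam m r L).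
        { intros L HL HnL. destruct (crit_cycle_exists n a lam s0 sg L Hn Hs0 Hsg HL HnL) as [ds [H1 [H2 H3]]].
          assert (Hrn : (r < n)%nat) by lia.
          assert (Hne : ds <> []) by (intro E; rewrite E in H1; simpl in H1; lia).
          assert (Hdlt : Forall (fun x => x < n)%nat ds) by (eapply Forall_impl; [|exact H2]; intros x [? ?]; auto).
          assert (Hwe : wend n r ds = r).
          { rewrite wend_sum by auto. rewrite mod0_add by auto. apply Nat.mod_small; auto. }
          exists (wnodes n r ds). split. destruct ds; [congruence|discriminate]. split.
          apply walk_comp; auto. eapply Forall_impl; [|exact H2]. intros x Hx; apply Hcd; auto.
          apply Nat.mod_small; lia. split. rewrite wnodes_cycle_edges by auto. apply pedges_crit; auto.
          rewrite wnodes_length; auto. }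
        pose proof (Hd _ (Hcyc (n * sg)%nat (Nat.divide_factor_r _ _) ltac:(destruct Hsg; nia))) as D1.
        pose proof (Hd _ (Hcyc ((n + 1) * sg)%nat (Nat.divide_factor_r _ _) ltac:(destruct Hsg; nia))) as D2.
        replace sg with ((n + 1) * sg - n * sg)%nat by nia. apply Nat.divide_sub_r; auto.
    + intro E. specialize (Hs0a E). subst s0. destruct Hsg as [Hsgp Hiff].
      apply Nat.divide_1_r. apply Hiff. apply (Ec_mod _ _ _ _ _ 0). rewrite Nat.sub_0_r, Nat.mul_1_l, Nat.Div0.mod_same.
      apply Nat.Div0.mod_0_l. apply D_zero; auto.
    + intro E. destruct (Hs0b E) as [Hs0e Hne]. subst s0.
      assert (HNT : NT n ps).
      { constructor; auto. intros p Hp. apply Hps in Hp. lia. }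
      apply formulas; auto. intro k. destruct Hsg as [Hsgp Hiff]. rewrite <- Hiff. split.
      * intro HE. apply Ec_gP in HE; auto.
        assert (hd 0%nat ps < n)%nat by (apply (nt_rng _ _ HNT); destruct ps; [congruence|left; auto]).
        apply (Nat.divide_add_cancel_r _ (k * (n - hd 0%nat ps))); auto.
        replace (k * (n - hd 0%nat ps) + k * hd 0%nat ps)%nat with (k * n)%nat by nia.
        apply Nat.divide_mul_r. apply gP_n.
      * intro HE. apply gP_Ec; auto.
        assert (hd 0%nat ps < n)%nat by (apply (nt_rng _ _ HNT); destruct ps; [congruence|left; auto]).
        apply (Nat.divide_add_cancel_r _ (k * hd 0%nat ps)); auto.
        replace (k * hd 0%nat ps + k * (n - hd 0%nat ps))%nat with (k * n)%nat by nia.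
        apply Nat.divide_mul_r. apply gP_n.
Qed.
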